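(* Let $\alpha>1$, $f\in SR_\alpha$, $b<\alpha$ and $k\in SR_b$. (i) There is $r_o>0$ such that for every $\Lambda>r_o$ the equation \[ g(\Lambda)f'(g(\Lambda))-f(g(\Lambda))+k(g(\Lambda))=\ln\Lambda \] has a unique solution $g\in SR_0$. Moreover, the function $h:(\ln r_o,\infty)\to\mathbb{R}$, $h(\Lambda)=g(\exp(\Lambda))$, belongs to $SR_{1/\alpha}$. (ii) For each $\gamma>0$ and $\delta>0$ there is $z>r_o$ such that for every $\Lambda>z$ and every $y\in[(\ln\Lambda)^{-\gamma},(\ln\Lambda)^{\gamma}]$, \[ \Big|g(\Lambda)\big[f'(g(y\Lambda))-f'(g(\Lambda))\big]-\ln y\Big|\le\delta|\ln y|. \] (iii) $\displaystyle\lim_{\Lambda\to\infty}\frac{g'(\Lambda)\Lambda\ln\Lambda}{g(\Lambda)}=\frac1\alpha$, $\displaystyle\lim_{\Lambda\to\infty}\frac{f(g(\Lambda))}{\ln\Lambda}=\frac1{\alpha-1}$, $\displaystyle\lim_{\Lambda\to\infty}\frac{g(\Lambda)f'(g(\Lambda))}{\ln\Lambda}=\frac{\alpha}{\alpha-1}$, and $\displaystyle\lim_{\Lambda\to\infty}\frac{g(\Lambda)f'(g(\Lambda))-f(g(\Lambda))}{\ln\Lambda}=1$. (iv) Let $k_0,k_1\in SR_b$ be such that $c:=\lim_{\Lambda\to\infty}(k_1(\Lambda)-k_0(\Lambda))\in\mathbb{R}$, and for $i\in\{0,1\}$ let $g_i$ be the unique solution of $g_i(\Lambda)f'(g_i(\Lambda))-f(g_i(\Lambda))+k_i(g_i(\Lambda))=\ln\Lambda$.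 Then for $i\in\{0,1\}$, \[ \lim_{\Lambda\to\infty}g_i(\Lambda)\big(f'(g_0(\Lambda))-f'(g_1(\Lambda))\big)=c. \]
   Context: A function $f:(z,\infty)\to\mathbb{R}$ is in $SR_\alpha$ (smoothly regularly varying with index $\alpha$) if $f$ is $C^\infty$, $z_o:=\max\{1,\sup\{\Lambda\ge z:f(\Lambda)\le0\}\}<\infty$, and $h(u):=\ln f(e^u)$ on $(\ln z_o,\infty)$ satisfies $h'(u)\to\alpha$ and $h^{(m)}(u)\to0$ for $m\ge2$ as $u\to\infty$. *)

(* Defs.v *)
From Stdlib Require Import Reals.
From Coquelicot Require Import Coquelicot.
Open Scope R_scope.

(* f : (z, oo) -> R is in SR_alpha (smoothly regularly varying with index alpha).
   f is a total function R -> R; only its values on (z, oo) matter. *)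
Definition SR_on (z alpha : R) (f : R -> R) : Prop :=
  (forall (n : nat) (x : R), z < x -> ex_derive_n f n x) /\
  (* z_o = max{1, sup{L >= z : f L <= 0}} < oo, i.e. that set is bounded above *)
  (exists M : R, forall x : R, z < x -> f x <= 0 -> x <= M) /\
  (let h := fun u : R => ln (f (exp u)) in
   is_lim (Derive h) p_infty (Finite alpha) /\
   forall m : nat, (2 <= m)%nat -> is_lim (Derive_n h m) p_infty (Finite 0)).

Definition SR (alpha : R) (f : R -> R) : Prop := exists z : R, SR_on z alpha f.

Definition sol_eq (f k : R -> R) (L x : R) : Prop :=
  x * Derive f x - f x + k x = ln L.

Definition is_solution_map (f k : R -> R) (r : R) (g : R -> R) : Prop :=
  exists x_o : R, forall L : R, r < L ->
    x_o < g L /\ sol_eq f k L (g L) /\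
    (forall x : R, x_o < x -> sol_eq f k L x -> x = g L).

(* Main.v *)
Require Import Defs.
From Stdlib Require Import Reals Lra Lia ClassicalEpsilon.
From Coquelicot Require Import Coquelicot.
Open Scope R_scope.

Definition ev (P : R -> Prop) := exists M : R, forall x, M < x -> P x.

Lemma ev_and P Q : ev P -> ev Q -> ev (fun x => P x /\ Q x).
Proof.
  intros [M1 H1] [M2 H2]; exists (Rmax M1 M2); intros x Hx; split.
  apply H1; apply Rle_lt_trans with (2 := Hx); apply Rmax_l.
  apply H2; apply Rle_lt_trans with (2 := Hx); apply Rmax_r.
Qed.

Lemma ev_imp (P Q : R -> Prop) : ev P -> (forall x, P x -> Q x) -> ev Q.
Proof. intros [M H] HPQ; exists M; intros; auto. Qed.

Lemma ev_gt a : ev (fun x => a < x).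
Proof. exists a; auto. Qed.

Lemma loc_gt a x : a < x -> locally x (fun t => a < t).
Proof.
  intros H. assert (He : 0 < x - a) by lra. exists (mkposreal _ He).
  intros y Hy. unfold ball in Hy; simpl in Hy. unfold AbsRing_ball, abs, minus, plus, opp in Hy; simpl in Hy.
  apply Rabs_def2 in Hy. lra.
Qed.

Lemma loc_ev_gt (P : R -> Prop) M x : (forall y, M < y -> P y) -> M < x -> locally x P.
Proof. intros H Hx. eapply filter_imp; [|apply (loc_gt M x Hx)]. auto. Qed.

Lemma lim_ev l f : is_lim f p_infty (Finite l) -> forall eps, 0 < eps -> ev (fun x => Rabs (f x - l) < eps).
Proof.
  intros H eps He. apply is_lim_spec in H. exact (H (mkposreal _ He)).
Qed.

Lemma lim_ev_gt l f c : is_lim f p_infty (Finite l) -> c < l -> ev (fun x => c < f x).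
Proof.
  intros H Hc. apply (ev_imp _ _ (lim_ev l f H (l - c) ltac:(lra))).
  intros x Hx. apply Rabs_def2 in Hx. lra.
Qed.

Lemma lim_ev_lt l f c : is_lim f p_infty (Finite l) -> l < c -> ev (fun x => f x < c).
Proof.
  intros H Hc. apply (ev_imp _ _ (lim_ev l f H (c - l) ltac:(lra))).
  intros x Hx. apply Rabs_def2 in Hx. lra.
Qed.

Lemma lim_ext_ev f g l : ev (fun x => f x = g x) -> is_lim f p_infty l -> is_lim g p_infty l.
Proof. intros H; apply is_lim_ext_loc; exact H. Qed.

Lemma lim_mult f g a b : is_lim f p_infty (Finite a) -> is_lim g p_infty (Finite b) ->
  is_lim (fun x => f x * g x) p_infty (a * b).
Proof. intros H1 H2. apply (is_lim_mult f g p_infty a b H1 H2). exact I. Qed.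

Lemma lim_plus f g a b : is_lim f p_infty (Finite a) -> is_lim g p_infty (Finite b) ->
  is_lim (fun x => f x + g x) p_infty (a + b).
Proof. intros; apply is_lim_plus'; auto. Qed.

Lemma lim_minus f g a b : is_lim f p_infty (Finite a) -> is_lim g p_infty (Finite b) ->
  is_lim (fun x => f x - g x) p_infty (a - b).
Proof. intros; apply is_lim_minus'; auto. Qed.

Lemma lim_inv f a : is_lim f p_infty (Finite a) -> a <> 0 -> is_lim (fun x => / f x) p_infty (/ a).
Proof.
  intros H Ha. apply (is_lim_inv f p_infty a H). intro E; apply Ha; injection E; auto.
Qed.

Lemma lim_const c : is_lim (fun _ => c) p_infty (Finite c).
Proof. apply is_lim_const. Qed.

Lemma lim_comp_inf f g l : is_lim f p_infty l -> is_lim g p_infty p_infty -> is_lim (fun x => f (g x)) p_infty l.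
Proof. intros H1 H2. eapply is_lim_comp; eauto. exists 0; intros; discriminate. Qed.

Fixpoint smn (n : nat) (a : R) (p : R -> R) : Prop :=
  match n with
  | O => True
  | S n => (forall x, a < x -> ex_derive p x) /\ smn n a (Derive p)
  end.

Definition smooth a p := forall n, smn n a p.

Lemma smn_mono n a p : smn (S n) a p -> smn n a p.
Proof.
  revert p; induction n; intros p H; simpl in *; auto.
  destruct H as [H1 H2]; split; auto.
Qed.

Lemma smn_ext n a p q : (forall x, a < x -> p x = q x) -> smn n a p -> smn n a q.
Proof.
  revert p q; induction n; intros p q E H; simpl in *; auto.
  destruct H as [H1 H2]; split.
  - intros x Hx. eapply ex_derive_ext_loc; [|apply H1; auto].
    apply (loc_ev_gt _ a); auto.
  - apply IHn with (Derive p); auto.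
    intros x Hx; apply Derive_ext_loc. apply (loc_ev_gt _ a); auto.
Qed.

Lemma smn_const n a c : smn n a (fun _ => c).
Proof.
  revert c; induction n; intros c; simpl; auto. split.
  - intros; apply ex_derive_const.
  - apply smn_ext with (fun _ => 0); auto. intros; rewrite Derive_const; auto.
Qed.

Lemma smn_plus n a p q : smn n a p -> smn n a q -> smn n a (fun x => p x + q x).
Proof.
  revert p q; induction n; intros p q Hp Hq; simpl in *; auto.
  destruct Hp as [Hp1 Hp2], Hq as [Hq1 Hq2]; split.
  - intros x Hx; apply (ex_derive_plus p q); auto.
  - apply smn_ext with (fun x => Derive p x + Derive q x); auto.
    intros x Hx; rewrite Derive_plus; auto.
Qed.

Lemma smn_mult n a p q : smn n a p -> smn n a q -> smn n a (fun x => p x * q x).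
Proof.
  revert p q; induction n; intros p q Hp Hq; simpl; auto.
  pose proof (smn_mono _ _ _ Hp) as Hp'. pose proof (smn_mono _ _ _ Hq) as Hq'.
  destruct Hp as [Hp1 Hp2], Hq as [Hq1 Hq2]; split.
  - intros x Hx; apply ex_derive_mult; auto.
  - apply smn_ext with (fun x => Derive p x * q x + p x * Derive q x).
    + intros x Hx; rewrite Derive_mult; auto.
    + apply smn_plus; auto.
Qed.

Lemma smn_comp n a b p q : smn n b p -> smn n a q -> (forall x, a < x -> b < q x) ->
  smn n a (fun x => p (q x)).
Proof.
  revert p q; induction n; intros p q Hp Hq Hab; simpl; auto.
  pose proof (smn_mono _ _ _ Hq) as Hq'.
  destruct Hp as [Hp1 Hp2], Hq as [Hq1 Hq2]; split.
  - intros x Hx; apply ex_derive_comp; auto.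
  - apply smn_ext with (fun x => Derive q x * Derive p (q x)).
    + intros x Hx; rewrite (Derive_comp p q x); auto.
    + apply smn_mult; auto.
Qed.

Lemma smooth_Derive a p : smooth a p -> smooth a (Derive p).
Proof. intros H n. exact (proj2 (H (S n))). Qed.

Lemma smooth_ex_derive a p x : smooth a p -> a < x -> ex_derive p x.
Proof. intros H Hx. exact (proj1 (H 1%nat) x Hx). Qed.

Lemma smn_id n a : smn n a (fun x => x).
Proof.
  destruct n; simpl; auto. split.
  - intros; apply ex_derive_id.
  - apply smn_ext with (fun _ => 1). intros; rewrite <- (Derive_id x); reflexivity.
    apply smn_const.
Qed.

Lemma smn_exp n a : smn n a exp.
Proof.
  induction n; simpl; auto. split.
  - intros x _; eexists; apply is_derive_exp.
  - apply smn_ext with exp; auto. intros; symmetry; apply is_derive_unique, is_derive_exp.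
Qed.

Lemma smn_Rinv n : smn n 0 Rinv.
Proof.
  induction n; simpl; auto. split.
  - intros x Hx. auto_derive. lra.
  - apply smn_ext with (fun x => (-1) * (/ x * / x)).
    + intros x Hx. symmetry. apply is_derive_unique.
      auto_derive; [lra|]. field; lra.
    + apply smn_mult; [apply smn_const|]. apply smn_mult; auto.
Qed.

Lemma smn_ln n : smn n 0 ln.
Proof.
  destruct n; simpl; auto. split.
  - intros x Hx; eexists; apply is_derive_ln; auto.
  - apply smn_ext with Rinv.
    + intros x Hx; symmetry; apply is_derive_unique, is_derive_ln; auto.
    + apply smn_Rinv.
Qed.

Lemma Dn_S n p t : Derive_n (Derive p) n t = Derive_n p (S n) t.
Proof.
  rewrite (Derive_n_comp p n 1). rewrite Nat.add_1_r. reflexivity.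
Qed.

Lemma smooth_ex_derive_Dn a p : smooth a p -> forall n x, a < x -> ex_derive (Derive_n p n) x.
Proof.
  intros H n. revert p H; induction n; intros p H x Hx.
  - simpl. apply (smooth_ex_derive a p); auto.
  - apply ex_derive_ext with (Derive_n (Derive p) n).
    + intros; apply Dn_S.
    + apply IHn; auto. apply smooth_Derive; auto.
Qed.

Lemma smooth_ex_derive_n a p : smooth a p -> forall n x, a < x -> ex_derive_n p n x.
Proof.
  intros H n x Hx. destruct n; simpl; auto. apply (smooth_ex_derive_Dn a); auto.
Qed.

Lemma smooth_of_ex_derive_n a p : (forall n x, a < x -> ex_derive_n p n x) -> smooth a p.
Proof.
  intros H n. assert (H' : forall j x, a < x -> ex_derive (Derive_n p j) x).
  { intros j x Hx. exact (H (S j) x Hx). }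
  clear H. revert p H'; induction n; intros p H; simpl; auto. split.
  - intros x Hx; exact (H 0%nat x Hx).
  - apply IHn. intros j x Hx. apply ex_derive_ext with (Derive_n p (S j)).
    + intros; symmetry; apply Dn_S.
    + apply H; auto.
Qed.

Definition Cn0 (p : R -> R) := exists l : R, is_lim p p_infty l.

Fixpoint Cn (n : nat) (p : R -> R) : Prop :=
  match n with
  | O => Cn0 p
  | S n => Cn0 p /\ ev (fun x : R => ex_derive p x) /\ is_lim (Derive p) p_infty 0 /\ Cn n (Derive p)
  end.

Lemma Cn_Cn0 n p : Cn n p -> Cn0 p.
Proof. destruct n; simpl; tauto. Qed.

Lemma Cn_mono n p : Cn (S n) p -> Cn n p.
Proof.
  revert p; induction n; intros p H; simpl in *; [tauto|].
  destruct H as (H1 & H2 & H3 & H4). exact (conj H1 (conj H2 (conj H3 (IHn _ H4)))).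
Qed.

Lemma Cn_le n m p : (m <= n)%nat -> Cn n p -> Cn m p.
Proof.
  induction 1; auto. intros H'; apply IHle, Cn_mono; auto.
Qed.

Lemma ev_Derive_ext (p q : R -> R) : ev (fun x => p x = q x) -> ev (fun x => Derive p x = Derive q x).
Proof.
  intros [M H]; exists M; intros x Hx; apply Derive_ext_loc. apply (loc_ev_gt _ M); auto.
Qed.

Lemma ev_ex_derive_ext (p q : R -> R) : ev (fun x => p x = q x) -> ev (fun x : R => ex_derive p x) -> ev (fun x : R => ex_derive q x).
Proof.
  intros [M H] [M2 H2]; exists (Rmax M M2); intros x Hx.
  apply ex_derive_ext_loc with p.
  - apply (loc_ev_gt _ M); auto. apply Rle_lt_trans with (2 := Hx); apply Rmax_l.
  - apply H2. apply Rle_lt_trans with (2 := Hx); apply Rmax_r.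
Qed.

Lemma Cn0_ext p q : ev (fun x => p x = q x) -> Cn0 p -> Cn0 q.
Proof. intros E [l Hl]; exists l; apply lim_ext_ev with p; auto. Qed.

Lemma Cn_ext n p q : ev (fun x => p x = q x) -> Cn n p -> Cn n q.
Proof.
  revert p q; induction n; intros p q E H; simpl in *.
  - apply Cn0_ext with p; auto.
  - destruct H as (H1 & H2 & H3 & H4). repeat split.
    + apply Cn0_ext with p; auto.
    + apply ev_ex_derive_ext with p; auto.
    + apply lim_ext_ev with (Derive p); auto. apply ev_Derive_ext; auto.
    + apply IHn with (Derive p); auto. apply ev_Derive_ext; auto.
Qed.

Lemma Cn_const n c : Cn n (fun _ => c).
Proof.
  revert c; induction n; intros c; simpl.
  - exists c; apply lim_const.
  - repeat split.
    + exists c; apply lim_const.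
    + exists 0; intros; apply ex_derive_const.
    + apply lim_ext_ev with (fun _ => 0). exists 0; intros; rewrite Derive_const; auto. apply lim_const.
    + apply Cn_ext with (fun _ => 0). exists 0; intros; rewrite Derive_const; auto. apply IHn.
Qed.

Lemma Cn0_plus p q : Cn0 p -> Cn0 q -> Cn0 (fun x => p x + q x).
Proof. intros [a Ha] [b Hb]; exists (a + b); apply lim_plus; auto. Qed.

Lemma Cn0_mult p q : Cn0 p -> Cn0 q -> Cn0 (fun x => p x * q x).
Proof. intros [a Ha] [b Hb]; exists (a * b); apply lim_mult; auto. Qed.

Lemma Cn_plus n p q : Cn n p -> Cn n q -> Cn n (fun x => p x + q x).
Proof.
  revert p q; induction n; intros p q Hp Hq; simpl in *.
  - apply Cn0_plus; auto.
  - destruct Hp as (Hp1 & Hp2 & Hp3 & Hp4), Hq as (Hq1 & Hq2 & Hq3 & Hq4).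
    assert (E : ev (fun x => Derive p x + Derive q x = Derive (fun x => p x + q x) x)).
    { apply (ev_imp _ _ (ev_and _ _ Hp2 Hq2)). intros x [A B]; rewrite Derive_plus; auto. }
    repeat split.
    + apply Cn0_plus; auto.
    + apply (ev_imp _ _ (ev_and _ _ Hp2 Hq2)). intros x [A B]; apply (ex_derive_plus p q); auto.
    + apply lim_ext_ev with (2 := lim_plus _ _ _ _ Hp3 Hq3) in E. rewrite Rplus_0_r in E; exact E.
    + apply Cn_ext with (1 := E). apply IHn; auto.
Qed.

Lemma Cn_mult n p q : Cn n p -> Cn n q -> Cn n (fun x => p x * q x).
Proof.
  revert p q; induction n; intros p q Hp Hq; simpl in *.
  - apply Cn0_mult; auto.
  - pose proof (Cn_mono _ _ Hp) as Hp'. pose proof (Cn_mono _ _ Hq) as Hq'.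
    destruct Hp as (Hp1 & Hp2 & Hp3 & Hp4), Hq as (Hq1 & Hq2 & Hq3 & Hq4).
    assert (E : ev (fun x => Derive p x * q x + p x * Derive q x = Derive (fun x => p x * q x) x)).
    { apply (ev_imp _ _ (ev_and _ _ Hp2 Hq2)). intros x [A B]; rewrite Derive_mult; auto. }
    repeat split.
    + apply Cn0_mult; auto.
    + apply (ev_imp _ _ (ev_and _ _ Hp2 Hq2)). intros x [A B]; apply ex_derive_mult; auto.
    + apply lim_ext_ev with (1 := E).
      destruct Hp1 as [a Ha], Hq1 as [b Hb].
      replace (Finite 0) with (Finite (0 * b + a * 0)) by (f_equal; ring).
      apply lim_plus; apply lim_mult; auto.
    + apply Cn_ext with (1 := E). apply Cn_plus; apply IHn; auto.
Qed.

Lemma Cn_scal n c p : Cn n p -> Cn n (fun x => c * p x).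
Proof. intros; apply Cn_mult; auto; apply Cn_const. Qed.

Lemma Cn_opp n p : Cn n p -> Cn n (fun x => - p x).
Proof.
  intros H; apply Cn_ext with (fun x => (-1) * p x). exists 0; intros; ring.
  apply Cn_scal; auto.
Qed.

Lemma Cn_minus n p q : Cn n p -> Cn n q -> Cn n (fun x => p x - q x).
Proof. intros; apply Cn_plus; auto; apply Cn_opp; auto. Qed.

Lemma Cn_inv n p l : is_lim p p_infty (Finite l) -> l <> 0 -> ev (fun x => p x <> 0) -> Cn n p ->
  Cn n (fun x => / p x).
Proof.
  intros Hl Hl0 Hne. revert p Hl Hne; induction n; intros p Hl Hne Hp; simpl in *.
  - exists (/ l); apply lim_inv; auto.
  - pose proof (Cn_mono _ _ Hp) as Hp'.
    destruct Hp as (Hp1 & Hp2 & Hp3 & Hp4).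
    assert (E : ev (fun x => (-1) * Derive p x * (/ p x * / p x) = Derive (fun x => / p x) x)).
    { apply (ev_imp _ _ (ev_and _ _ Hp2 Hne)). intros x [[d A] B].
      symmetry; apply is_derive_unique.
      rewrite (is_derive_unique _ _ _ A).
      replace ((-1) * d * (/ p x * / p x)) with (- d / p x ^ 2) by (field; auto).
      apply is_derive_inv; auto. }
    repeat split.
    + exists (/ l); apply lim_inv; auto.
    + apply (ev_imp _ _ (ev_and _ _ Hp2 Hne)). intros x [[d A] B].
      eexists; apply is_derive_inv; eauto.
    + apply lim_ext_ev with (1 := E).
      replace (Finite 0) with (Finite ((-1) * 0 * (/ l * / l))) by (f_equal; ring).
      apply lim_mult; [apply lim_mult|]; auto. apply lim_const.
      apply lim_mult; apply lim_inv; auto.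
    + apply Cn_ext with (1 := E). apply Cn_mult; [apply Cn_scal; auto|].
      apply Cn_mult; apply IHn; auto.
Qed.

Lemma cont_exd (f : R -> R) x : ex_derive f x -> continuous f x.
Proof. intros H. apply (ex_derive_continuous (K := R_AbsRing) (V := R_NormedModule) f x H). Qed.

Lemma Cn_ln n w l : is_lim w p_infty (Finite l) -> 0 < l -> ev (fun x => 0 < w x) -> Cn n w ->
  Cn n (fun x => ln (w x)).
Proof.
  intros Hl Hl0 Hpos Hw. destruct n; simpl in *.
  - exists (ln l). apply (is_lim_comp_continuous w ln p_infty l Hl).
    apply cont_exd. eexists; apply is_derive_ln; auto.
  - pose proof (Cn_mono _ _ Hw) as Hw'.
    destruct Hw as (H1 & H2 & H3 & H4).
    assert (E : ev (fun x => Derive w x * / w x = Derive (fun x => ln (w x)) x)).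
    { apply (ev_imp _ _ (ev_and _ _ H2 Hpos)). intros x [A B].
      rewrite (Derive_comp ln w x); auto.
      - rewrite (is_derive_unique ln (w x) (/ w x)); auto. apply is_derive_ln; auto.
      - eexists; apply is_derive_ln; auto. }
    repeat split.
    + exists (ln l). apply (is_lim_comp_continuous w ln p_infty l Hl).
      apply cont_exd. eexists; apply is_derive_ln; auto.
    + apply (ev_imp _ _ (ev_and _ _ H2 Hpos)). intros x [A B].
      apply ex_derive_comp; auto. eexists; apply is_derive_ln; auto.
    + apply lim_ext_ev with (1 := E).
      replace (Finite 0) with (Finite (0 * / l)) by (f_equal; ring).
      apply lim_mult; auto. apply lim_inv; auto; lra.
    + apply Cn_ext with (1 := E). apply Cn_mult; auto.
      apply Cn_inv with l; auto. lra. apply (ev_imp _ _ Hpos). intros; lra.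
Qed.

Lemma Cn_exp n psi : is_lim psi p_infty m_infty -> ev (fun x : R => ex_derive psi x) ->
  Cn n (Derive psi) -> Cn n (fun x => exp (psi x)).
Proof.
  intros Hm Hd. assert (L0 : is_lim (fun x => exp (psi x)) p_infty 0).
  { eapply is_lim_comp. apply is_lim_exp_m. exact Hm. exists 0; intros; discriminate. }
  induction n; intros Hp; simpl in *.
  - exists 0; auto.
  - pose proof (Cn_mono _ _ Hp) as Hp'.
    destruct Hp as (H1 & H2 & H3 & H4).
    assert (E : ev (fun x => exp (psi x) * Derive psi x = Derive (fun x => exp (psi x)) x)).
    { apply (ev_imp _ _ Hd). intros x A.
      rewrite (Derive_comp exp psi x); auto.
      - rewrite (is_derive_unique exp (psi x) (exp (psi x))); [ring|]. apply is_derive_exp.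
      - eexists; apply is_derive_exp. }
    repeat split.
    + exists 0; auto.
    + apply (ev_imp _ _ Hd). intros x A.
      apply ex_derive_comp; auto. eexists; apply is_derive_exp.
    + apply lim_ext_ev with (1 := E). destruct H1 as [l Hl].
      replace (Finite 0) with (Finite (0 * l)) by (f_equal; ring).
      apply lim_mult; auto.
    + apply Cn_ext with (1 := E). apply Cn_mult; auto.
Qed.

Lemma Cn_comp_gen n q : is_lim q p_infty p_infty -> ev (fun x : R => ex_derive q x) ->
  forall p, Cn n p -> Cn n (Derive q) -> Cn n (fun x => p (q x)).
Proof.
  intros Hq Hd. induction n; intros p Hp Hq'; simpl in *.
  - destruct Hp as [l Hl]; exists l; apply lim_comp_inf; auto.
  - pose proof (Cn_mono _ _ Hq') as Hq''.
    destruct Hp as (H1 & H2 & H3 & H4).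
    assert (Ep : ev (fun x => ex_derive p (q x))).
    { destruct H2 as [M HM]. apply is_lim_spec in Hq. destruct (Hq M) as [M' HM'].
      exists M'; intros; apply HM; auto. }
    assert (E : ev (fun x => Derive q x * Derive p (q x) = Derive (fun x => p (q x)) x)).
    { apply (ev_imp _ _ (ev_and _ _ Hd Ep)). intros x [A B].
      rewrite (Derive_comp p q x); auto. }
    repeat split.
    + destruct H1 as [l Hl]; exists l; apply lim_comp_inf; auto.
    + apply (ev_imp _ _ (ev_and _ _ Hd Ep)). intros x [A B]. apply ex_derive_comp; auto.
    + apply lim_ext_ev with (1 := E). destruct (Cn_Cn0 _ _ Hq'') as [l Hl].
      replace (Finite 0) with (Finite (l * 0)) by (f_equal; ring).
      apply lim_mult; auto. apply lim_comp_inf; auto.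
    + apply Cn_ext with (1 := E). apply Cn_mult; auto.
Qed.

Lemma Cn_comp_step n q p : is_lim q p_infty p_infty -> ev (fun x : R => ex_derive q x) ->
  Cn (S n) p -> Cn n (Derive q) -> Cn (S n) (fun x => p (q x)).
Proof.
  intros Hq Hd Hp Hq'. simpl in *.
  destruct Hp as (H1 & H2 & H3 & H4).
  assert (Ep : ev (fun x => ex_derive p (q x))).
  { destruct H2 as [M HM]. apply is_lim_spec in Hq. destruct (Hq M) as [M' HM'].
    exists M'; intros; apply HM; auto. }
  assert (E : ev (fun x => Derive q x * Derive p (q x) = Derive (fun x => p (q x)) x)).
  { apply (ev_imp _ _ (ev_and _ _ Hd Ep)). intros x [A B].
    rewrite (Derive_comp p q x); auto. }
  repeat split.
  + destruct H1 as [l Hl]; exists l; apply lim_comp_inf; auto.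
  + apply (ev_imp _ _ (ev_and _ _ Hd Ep)). intros x [A B]. apply ex_derive_comp; auto.
  + apply lim_ext_ev with (1 := E). destruct (Cn_Cn0 _ _ Hq') as [l Hl].
    replace (Finite 0) with (Finite (l * 0)) by (f_equal; ring).
    apply lim_mult; auto. apply lim_comp_inf; auto.
  + apply Cn_ext with (1 := E). apply Cn_mult; auto. apply Cn_comp_gen; auto.
Qed.

Lemma lim_recip : is_lim (fun x => / x) p_infty 0.
Proof.
  apply (is_lim_inv (fun x => x) p_infty p_infty). apply is_lim_id. discriminate.
Qed.

Lemma Cn_recip n : Cn n (fun x => / x).
Proof.
  induction n; simpl.
  - exists 0; apply lim_recip.
  - assert (E : ev (fun x => (-1) * (/ x * / x) = Derive (fun x => / x) x)).
    { exists 0; intros x Hx. symmetry; apply is_derive_unique. auto_derive; [lra|]. field; lra. }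
    repeat split.
    + exists 0; apply lim_recip.
    + exists 0; intros x Hx. auto_derive; lra.
    + apply lim_ext_ev with (1 := E).
      replace (Finite 0) with (Finite ((-1) * (0 * 0))) by (f_equal; ring).
      apply lim_mult; [apply lim_const|]. apply lim_mult; apply lim_recip.
    + apply Cn_ext with (1 := E). apply Cn_scal. apply Cn_mult; auto.
Qed.

Lemma Cn_lim_Dn n p j : Cn n p -> (1 <= j <= n)%nat -> is_lim (Derive_n p j) p_infty 0.
Proof.
  revert p j; induction n; intros p j Hp Hj; [lia|].
  simpl in Hp. destruct Hp as (H1 & H2 & H3 & H4).
  destruct j as [|j]; [lia|]. destruct j as [|j].
  - exact H3.
  - apply is_lim_ext with (Derive_n (Derive p) (S j)).
    + intros; apply Dn_S.
    + apply IHn; auto. lia.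
Qed.

Lemma Cn_from_SR a h l : smooth a h -> is_lim (Derive h) p_infty (Finite l) ->
  (forall m, (2 <= m)%nat -> is_lim (Derive_n h m) p_infty (Finite 0)) ->
  forall n, Cn n (Derive h).
Proof.
  intros Hs Hl Hm n.
  assert (G : forall n j, (1 <= j)%nat -> Cn n (Derive_n h j)).
  { clear n. induction n; intros j Hj.
    - destruct j as [|j]; [lia|]. destruct j as [|j].
      + exists l; exact Hl.
      + exists 0; apply Hm; lia.
    - simpl. repeat split.
      + destruct j as [|j]; [lia|]. destruct j as [|j].
        * exists l; exact Hl.
        * exists 0; apply Hm; lia.
      + exists a; intros x Hx; apply (smooth_ex_derive_Dn a); auto.
      + apply (Hm (S j)); lia.
      + apply (IHn (S j)); lia. }
  apply (G n 1%nat); lia.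
Qed.

Lemma mvt (p : R -> R) a b : (forall y, Rmin a b <= y <= Rmax a b -> ex_derive p y) ->
  exists c, Rmin a b <= c <= Rmax a b /\ p b - p a = Derive p c * (b - a).
Proof.
  intros H. apply MVT_gen.
  - intros x Hx. apply Derive_correct. apply H; lra.
  - intros x Hx. apply continuity_pt_filterlim. apply cont_exd. apply H; auto.
Qed.

Lemma mvt_lb (p : R -> R) a b c : a <= b -> (forall y, a <= y <= b -> ex_derive p y) ->
  (forall y, a <= y <= b -> c <= Derive p y) -> c * (b - a) <= p b - p a.
Proof.
  intros Hab Hd Hc. destruct (mvt p a b) as [x [Hx E]].
  - rewrite Rmin_left, Rmax_right in *; auto.
  - rewrite Rmin_left, Rmax_right in Hx by auto. rewrite E.
    apply Rmult_le_compat_r; [lra|]. apply Hc; auto.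
Qed.

Lemma mvt_ub (p : R -> R) a b c : a <= b -> (forall y, a <= y <= b -> ex_derive p y) ->
  (forall y, a <= y <= b -> Derive p y <= c) -> p b - p a <= c * (b - a).
Proof.
  intros Hab Hd Hc. destruct (mvt p a b) as [x [Hx E]].
  - rewrite Rmin_left, Rmax_right in *; auto.
  - rewrite Rmin_left, Rmax_right in Hx by auto. rewrite E.
    apply Rmult_le_compat_r; [lra|]. apply Hc; auto.
Qed.

Lemma to_pinfty (p : R -> R) c : 0 < c -> ev (fun x => ex_derive p x /\ c <= Derive p x) ->
  is_lim p p_infty p_infty.
Proof.
  intros Hc [M HM]. apply is_lim_spec. intros K.
  exists (Rmax (M + 1) (M + 1 + (K - p (M + 1)) / c)). intros x Hx.
  assert (H1 : M + 1 <= x) by (apply Rle_trans with (2 := Rlt_le _ _ Hx); apply Rmax_l).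
  assert (H2 : M + 1 + (K - p (M + 1)) / c < x) by (apply Rle_lt_trans with (2 := Hx); apply Rmax_r).
  assert (H3 := mvt_lb p (M + 1) x c H1 (fun y Hy => proj1 (HM y ltac:(lra))) (fun y Hy => proj2 (HM y ltac:(lra)))).
  assert (H4 : K - p (M + 1) < c * (x - (M + 1))).
  { apply Rmult_lt_reg_l with (/ c). apply Rinv_0_lt_compat; auto.
    rewrite <- Rmult_assoc, Rinv_l, Rmult_1_l by lra. unfold Rdiv in H2. lra. }
  lra.
Qed.

Lemma to_minfty (p : R -> R) c : c < 0 -> ev (fun x => ex_derive p x /\ Derive p x <= c) ->
  is_lim p p_infty m_infty.
Proof.
  intros Hc H. assert (L : is_lim (fun x => - p x) p_infty p_infty).
  { apply to_pinfty with (- c). lra. apply (ev_imp _ _ H). intros x [A B]; split.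
    - apply ex_derive_opp in A; exact A.
    - rewrite Derive_opp; lra. }
  apply is_lim_opp in L. simpl in L. apply is_lim_ext with (2 := L). intros; ring.
Qed.

Lemma smn_shift n a a' p : a <= a' -> smn n a p -> smn n a' p.
Proof.
  intros Ha; revert p; induction n; intros p H; simpl in *; auto.
  destruct H as [H1 H2]; split; auto. intros x Hx; apply H1; lra.
Qed.

Lemma smooth_shift a a' p : a <= a' -> smooth a p -> smooth a' p.
Proof. intros Ha H n; apply smn_shift with a; auto. Qed.

Lemma ev_ex (P : R -> Prop) : ev P -> forall a, exists M, a <= M /\ forall x, M < x -> P x.
Proof.
  intros [M H] a; exists (Rmax a M); split; [apply Rmax_l|].
  intros x Hx; apply H. apply Rle_lt_trans with (2 := Hx); apply Rmax_r.
Qed.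

Lemma smn_minus n a p q : smn n a p -> smn n a q -> smn n a (fun x => p x - q x).
Proof.
  intros Hp Hq. apply smn_ext with (fun x => p x + (-1) * q x).
  - intros; ring.
  - apply smn_plus; auto. apply smn_mult; auto. apply smn_const.
Qed.

Lemma smn_exp_comp n a q : smn n a q -> smn n a (fun x => exp (q x)).
Proof.
  revert q; induction n; intros q Hq; simpl; auto.
  pose proof (smn_mono _ _ _ Hq) as Hq'. destruct Hq as [H1 H2]. split.
  - intros x Hx. apply ex_derive_comp; auto. eexists; apply is_derive_exp.
  - apply smn_ext with (fun x => Derive q x * exp (q x)).
    + intros x Hx. rewrite (Derive_comp exp q x); auto.
      * rewrite (is_derive_unique exp (q x) (exp (q x))); auto. apply is_derive_exp.
      * eexists; apply is_derive_exp.
    + apply smn_mult; auto.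
Qed.

Lemma exp_minus x y : exp (x - y) = exp x / exp y.
Proof. unfold Rminus, Rdiv. rewrite exp_plus, exp_Ropp. reflexivity. Qed.

Lemma exp_gt_id x : x < exp x.
Proof. pose proof (exp_ineq1_le x); lra. Qed.

Lemma SR_log z a f : SR_on z a f ->
  let hf := fun v => ln (f (exp v)) in
  exists v0, 0 <= v0 /\ z < exp v0 /\ smooth z f /\ smooth v0 hf /\ (forall v, v0 < v -> 0 < f (exp v)) /\
    (forall n, Cn n (Derive hf)) /\ is_lim (Derive hf) p_infty (Finite a) /\
    (forall v, v0 < v -> Derive f (exp v) = f (exp v) * Derive hf v / exp v).
Proof.
  intros [Hs [[M HM] [Hl Hm]]] hf. simpl in Hl, Hm.
  assert (Sf : smooth z f) by (apply smooth_of_ex_derive_n; auto).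
  set (v0 := Rabs z + Rabs M).
  assert (Hv0 : 0 <= v0) by (unfold v0; pose proof (Rabs_pos z); pose proof (Rabs_pos M); lra).
  assert (Hgt : forall v, v0 < v -> z < exp v /\ M < exp v).
  { intros v Hv. pose proof (exp_gt_id v). unfold v0 in Hv.
    pose proof (Rle_abs z); pose proof (Rle_abs M); pose proof (Rabs_pos z); pose proof (Rabs_pos M). lra. }
  assert (Hpos : forall v, v0 < v -> 0 < f (exp v)).
  { intros v Hv. destruct (Hgt v Hv) as [A B]. destruct (Rle_or_lt (f (exp v)) 0) as [C|C]; auto.
    specialize (HM _ A C). lra. }
  assert (Ss : smooth v0 hf).
  { intros n. unfold hf. apply smn_comp with 0. apply smn_ln.
    - apply smn_comp with z; [apply Sf| apply smn_exp|]. intros; apply Hgt; auto.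
    - intros; apply Hpos; auto. }
  exists v0. split; [auto|]. split.
  { pose proof (exp_gt_id v0). unfold v0 in *. pose proof (Rle_abs z); pose proof (Rabs_pos M). lra. }
  split; [auto|]. split; [auto|]. split; [auto|]. split.
  - apply Cn_from_SR with v0 a; auto.
  - split; auto. intros v Hv.
    assert (Ed : ex_derive f (exp v)) by (apply (smooth_ex_derive z); auto; apply Hgt; auto).
    assert (E : Derive hf v = Derive f (exp v) * exp v / f (exp v)).
    { unfold hf. rewrite (Derive_comp ln (fun v => f (exp v)) v).
      - rewrite (Derive_comp f exp v); auto.
        + rewrite (is_derive_unique ln _ (/ f (exp v))) by (apply is_derive_ln; auto).
          rewrite (is_derive_unique exp _ (exp v)) by apply is_derive_exp.
          unfold Rdiv; ring.
        + eexists; apply is_derive_exp.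
      - eexists; apply is_derive_ln; auto.
      - apply ex_derive_comp; auto. eexists; apply is_derive_exp. }
    rewrite E. pose proof (Hpos v Hv). pose proof (exp_pos v). field; lra.
Qed.

Lemma incr_of_deriv (phi : R -> R) va c1 : 0 < c1 -> smooth va phi ->
  (forall v, va < v -> c1 <= Derive phi v) ->
  forall x y, va < x -> x <= y -> c1 * (y - x) <= phi y - phi x.
Proof.
  intros Hc Hs Hd x y Hx Hxy. apply mvt_lb; auto.
  - intros; apply (smooth_ex_derive va); auto; lra.
  - intros; apply Hd; lra.
Qed.

Lemma inv_fun (phi : R -> R) va c1 c2 : 0 < c1 -> smooth va phi ->
  (forall v, va < v -> c1 <= Derive phi v <= c2) ->
  exists (H : R -> R),
    (forall w, phi (va + 1) < w -> va + 1 < H w /\ phi (H w) = w) /\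
    (forall v, va + 1 < v -> H (phi v) = v) /\
    smooth (phi (va + 1)) H /\
    (forall w, phi (va + 1) < w -> Derive H w = / Derive phi (H w)) /\
    is_lim H p_infty p_infty.
Proof.
  intros Hc Hs Hd. set (v1 := va + 1).
  assert (Hc2 : c1 <= c2) by (destruct (Hd v1 ltac:(unfold v1; lra)); lra).
  assert (Inc : forall x y, va < x -> x <= y -> c1 * (y - x) <= phi y - phi x).
  { apply incr_of_deriv; auto. intros; apply Hd; auto. }
  assert (Dec : forall x y, va < x -> x <= y -> phi y - phi x <= c2 * (y - x)).
  { intros x y Hx Hxy. apply mvt_ub; auto.
    - intros; apply (smooth_ex_derive va); auto; lra.
    - intros; apply Hd; lra. }
  assert (Inj : forall x y, va < x -> va < y -> phi x = phi y -> x = y).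
  { intros x y Hx Hy E. destruct (Rle_or_lt x y) as [C|C].
    - pose proof (Inc x y Hx C). assert (c1 * (y - x) <= 0) by lra.
      destruct C as [C|C]; auto. pose proof (Rmult_lt_0_compat c1 (y - x) Hc ltac:(lra)). lra.
    - pose proof (Inc y x Hy (Rlt_le _ _ C)). pose proof (Rmult_lt_0_compat c1 (x - y) Hc ltac:(lra)). lra. }
  assert (Ex : forall w, phi v1 < w -> exists v, v1 < v /\ phi v = w).
  { intros w Hw. set (b := v1 + (w - phi v1) / c1 + 1).
    assert (Hb : v1 < b). { unfold b. assert (0 < (w - phi v1) / c1) by (apply Rdiv_lt_0_compat; lra). lra. }
    assert (Hpb : w < phi b).
    { pose proof (Inc v1 b ltac:(unfold v1; lra) (Rlt_le _ _ Hb)).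
      assert (c1 * (b - v1) = (w - phi v1) + c1) by (unfold b; field; lra). lra. }
    destruct (Ranalysis5.IVT_interv (fun v => phi v - w) v1 b) as [v [Hv E]]; auto.
    - intros a Ha. apply continuity_pt_minus; [|apply continuity_pt_const; intros ? ?; auto].
      apply continuity_pt_filterlim, cont_exd, (smooth_ex_derive va); auto. unfold v1 in *; lra.
    - simpl; lra.
    - simpl; lra.
    - simpl in E. exists v. split; [|lra]. destruct (proj1 Hv) as [C|C]; auto.
      subst v. lra. }
  set (H := fun w => epsilon (inhabits 0) (fun v => v1 < v /\ phi v = w)).
  assert (HS : forall w, phi v1 < w -> v1 < H w /\ phi (H w) = w).
  { intros w Hw. apply (epsilon_spec (inhabits 0) (fun v => v1 < v /\ phi v = w)). auto. }
  assert (HL : forall v, v1 < v -> H (phi v) = v).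
  { intros v Hv. destruct (Ex (phi v)) as [v' [A B]].
    - pose proof (Inc v1 v ltac:(unfold v1; lra) (Rlt_le _ _ Hv)). pose proof (Rmult_lt_0_compat c1 (v - v1) Hc ltac:(lra)). lra.
    - destruct (HS (phi v)) as [A' B']. 
      + pose proof (Inc v1 v ltac:(unfold v1; lra) (Rlt_le _ _ Hv)). pose proof (Rmult_lt_0_compat c1 (v - v1) Hc ltac:(lra)). lra.
      + apply Inj; auto; unfold v1 in *; lra. }
  assert (Lip : forall w w', phi v1 < w -> w <= w' -> c1 * (H w' - H w) <= w' - w).
  { intros w w' Hw Hww. destruct (HS w Hw) as [A B]. destruct (HS w' ltac:(lra)) as [A' B'].
    destruct (Rle_or_lt (H w) (H w')) as [C|C].
    - pose proof (Inc (H w) (H w') ltac:(unfold v1 in *; lra) C). lra.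
    - assert (c1 * (H w - H w') > 0) by (apply Rmult_lt_0_compat; lra).
      lra. }
  assert (Mon : forall w w', phi v1 < w -> w <= w' -> H w <= H w').
  { intros w w' Hw Hww. destruct (HS w Hw) as [A B]. destruct (HS w' ltac:(lra)) as [A' B'].
    destruct (Rle_or_lt (H w) (H w')) as [C|C]; auto.
    pose proof (Inc (H w') (H w) ltac:(unfold v1 in *; lra) (Rlt_le _ _ C)).
    pose proof (Rmult_lt_0_compat c1 (H w - H w') Hc ltac:(lra)). lra. }
  assert (Cont : forall w, phi v1 < w -> continuity_pt H w).
  { intros w Hw eps Heps. exists (Rmin (c1 * eps) (w - phi v1)). split.
    { apply Rmin_pos; [apply Rmult_lt_0_compat|]; lra. }
    intros w' [_ Hw']. simpl in *. unfold R_dist in *.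
    assert (Hm1 := Rmin_l (c1 * eps) (w - phi v1)). assert (Hm2 := Rmin_r (c1 * eps) (w - phi v1)).
    apply Rabs_def2 in Hw'. destruct Hw' as [Hw1 Hw2].
    destruct (Rle_or_lt w w') as [C|C].
    - pose proof (Lip w w' Hw C). pose proof (Mon w w' Hw C).
      rewrite Rabs_right by lra.
      apply Rmult_lt_reg_l with c1; auto. lra.
    - pose proof (Lip w' w ltac:(lra) (Rlt_le _ _ C)). pose proof (Mon w' w ltac:(lra) (Rlt_le _ _ C)).
      rewrite Rabs_left1 by lra.
      apply Rmult_lt_reg_l with c1; auto. lra. }
  assert (Der : forall w, phi v1 < w -> is_derive H w (/ Derive phi (H w))).
  { intros w Hw. set (lb := (phi v1 + w) / 2). set (ub := w + 1).
    assert (Hlb : phi v1 < lb) by (unfold lb; lra).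
    assert (Prf : forall a, H lb <= a <= H ub -> derivable_pt phi a).
    { intros a Ha. apply ex_derive_Reals_0. apply (smooth_ex_derive va); auto.
      destruct (HS lb Hlb). unfold v1 in *; lra. }
    assert (Pi : H lb <= H w <= H ub) by (split; apply Mon; unfold lb, ub in *; lra).
    apply is_derive_Reals.
    pose proof (Ranalysis5.derivable_pt_lim_recip_interv phi H lb ub w Prf (Cont w Hw)
      ltac:(unfold lb, ub; lra) ltac:(unfold lb, ub; lra) Pi) as D.
    rewrite Derive_Reals in D. replace (/ Derive phi (H w)) with (1 / Derive phi (H w)) by (unfold Rdiv; ring).
    apply D.
    - intros x0 Hx0. unfold comp, id. apply HS. unfold lb in *; lra.
    - destruct (HS w Hw). pose proof (Hd (H w) ltac:(unfold v1 in *; lra)). lra. }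
  exists H. split; [exact HS|]. split; [exact HL|]. split; [|split].
  - assert (Sinv : smooth va (fun v => / Derive phi v)).
    { intros n. apply smn_comp with 0; [apply smn_Rinv| apply smooth_Derive; auto|].
      intros v Hv; pose proof (Hd v Hv); lra. }
    intros n. induction n; simpl; auto. split.
    + intros w Hw; eexists; apply Der; auto.
    + apply smn_ext with (fun w => / Derive phi (H w)).
      * intros w Hw; symmetry; apply is_derive_unique, Der; auto.
      * apply (smn_comp n (phi v1) va (fun v => / Derive phi v) H); [apply Sinv|exact IHn|]. intros w Hw; destruct (HS w Hw); unfold v1 in *; lra.
  - intros w Hw; apply is_derive_unique, Der; auto.
  - apply is_lim_spec. intros K. exists (Rmax (phi v1 + 1) (phi v1 + c2 * (K - v1) + 1)).
    intros w Hw. assert (A1 := Rmax_l (phi v1 + 1) (phi v1 + c2 * (K - v1) + 1)).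
    assert (A2 := Rmax_r (phi v1 + 1) (phi v1 + c2 * (K - v1) + 1)).
    destruct (HS w ltac:(lra)) as [A B].
    pose proof (Dec v1 (H w) ltac:(unfold v1; lra) (Rlt_le _ _ A)).
    destruct (Rle_or_lt (H w) K) as [C|C]; auto.
    assert (c2 * (H w - v1) <= c2 * (K - v1)) by (apply Rmult_le_compat_l; lra). lra.
Qed.

Lemma inv_Cn (phi H : R -> R) c l : 0 < l -> (forall n, Cn n (Derive phi)) ->
  is_lim (Derive phi) p_infty (Finite l) ->
  (forall w, c < w -> Derive H w = / Derive phi (H w)) -> smooth c H -> is_lim H p_infty p_infty ->
  (forall n, Cn n (Derive H)) /\ is_lim (Derive H) p_infty (Finite (/ l)).
Proof.
  intros Hl Hc Hlim HD Hs Hinf.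
  assert (E : ev (fun w => / Derive phi (H w) = Derive H w)).
  { exists c; intros; symmetry; auto. }
  assert (Lim : is_lim (Derive H) p_infty (Finite (/ l))).
  { apply lim_ext_ev with (1 := E). apply (lim_comp_inf (fun v => / Derive phi v)); auto.
    apply lim_inv; auto; lra. }
  assert (CP : forall n, Cn n (fun v => / Derive phi v)).
  { intros n; apply Cn_inv with l; auto. lra. apply (ev_imp _ _ (lim_ev_gt _ _ 0 Hlim Hl)). intros; lra. }
  assert (Ed : ev (fun x : R => ex_derive H x)).
  { exists c; intros; apply (smooth_ex_derive c); auto. }
  split; auto. intros n; induction n.
  - simpl. exists (/ l); auto.
  - apply Cn_ext with (1 := E). apply (Cn_comp_step n H (fun v => / Derive phi v)); auto.
Qed.

Definition hlog (f : R -> R) (v : R) := ln (f (exp v)).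
Definition Wfun (f k : R -> R) (v : R) := Derive (hlog f) v - 1 + exp (hlog k v - hlog f v).
Definition Phif (f k : R -> R) (v : R) := hlog f v + ln (Wfun f k v).

Lemma core a b f k zf zk : 1 < a -> b < a -> SR_on zf a f -> SR_on zk b k ->
  exists va, 0 <= va /\ smooth zf f /\ zf < exp va /\
    smooth va (hlog f) /\ smooth va (hlog k) /\ smooth va (Wfun f k) /\ smooth va (Phif f k) /\
    (forall v, va < v -> 0 < f (exp v) /\ 0 < k (exp v) /\ (a - 1) / 2 < Wfun f k v /\
        a / 2 <= Derive (Phif f k) v <= 2 * a /\ Derive (hlog f) v <= 2 * a /\
        Derive f (exp v) = f (exp v) * Derive (hlog f) v / exp v /\
        exp v * Derive f (exp v) - f (exp v) + k (exp v) = exp (Phif f k v)) /\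
    is_lim (Wfun f k) p_infty (Finite (a - 1)) /\ is_lim (Derive (hlog f)) p_infty (Finite a) /\
    is_lim (Derive (Phif f k)) p_infty (Finite a) /\
    (forall n, Cn n (Derive (Phif f k))) /\ (forall n, Cn n (Derive (hlog f))) /\
    (forall n, Cn n (Wfun f k)) /\
    is_lim (fun v => hlog k v - hlog f v) p_infty m_infty.
Proof.
  intros Ha Hb SRf SRk.
  destruct (SR_log _ _ _ SRf) as (v0f & Hv0f & Hzf & Sf & Shf & Hfpos & Cnf & Limf & Df).
  destruct (SR_log _ _ _ SRk) as (v0k & Hv0k & Hzk & Sk & Shk & Hkpos & Cnk & Limk & Dk).
  change (fun v => ln (f (exp v))) with (hlog f) in *.
  change (fun v => ln (k (exp v))) with (hlog k) in *.
  set (vb := Rmax v0f v0k).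
  assert (Hvb1 : v0f <= vb) by apply Rmax_l. assert (Hvb2 : v0k <= vb) by apply Rmax_r.
  assert (Shf' := smooth_shift _ _ _ Hvb1 Shf). assert (Shk' := smooth_shift _ _ _ Hvb2 Shk).
  set (psi := fun v => hlog k v - hlog f v).
  assert (Spsi : smooth vb psi) by (intros n; apply smn_minus; auto).
  assert (Dpsi : ev (fun v => Derive (hlog k) v - Derive (hlog f) v = Derive psi v)).
  { exists vb; intros v Hv. unfold psi. rewrite Derive_minus; auto.
    - apply (smooth_ex_derive vb); auto.
    - apply (smooth_ex_derive vb); auto. }
  assert (Lpsi : is_lim (Derive psi) p_infty (Finite (b - a))).
  { apply lim_ext_ev with (1 := Dpsi). apply lim_minus; auto. }
  assert (Cpsi : forall n, Cn n (Derive psi)).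
  { intros n; apply Cn_ext with (1 := Dpsi). apply Cn_minus; auto. }
  assert (Mpsi : is_lim psi p_infty m_infty).
  { apply to_minfty with ((b - a) / 2). lra.
    apply (ev_imp _ _ (ev_and _ _ (ev_gt vb) (lim_ev_lt _ _ ((b - a) / 2) Lpsi ltac:(lra)))).
    intros x [A B]; split; [apply (smooth_ex_derive vb); auto| lra]. }
  assert (CE : forall n, Cn n (fun v => exp (psi v))).
  { intros n; apply Cn_exp; auto. exists vb; intros; apply (smooth_ex_derive vb); auto. }
  assert (LE : is_lim (fun v => exp (psi v)) p_infty (Finite 0)).
  { eapply is_lim_comp. apply is_lim_exp_m. exact Mpsi. exists 0; intros; discriminate. }
  assert (CW : forall n, Cn n (Wfun f k)).
  { intros n. apply Cn_ext with (fun x => (fun y => Derive (hlog f) y - 1) x + (fun y => exp (psi y)) x).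
    - exists 0; intros; reflexivity.
    - apply Cn_plus; auto. apply Cn_minus; auto. apply Cn_const. }
  assert (LW : is_lim (Wfun f k) p_infty (Finite (a - 1))).
  { apply lim_ext_ev with (fun x => (fun y => Derive (hlog f) y - 1) x + (fun y => exp (psi y)) x).
    - exists 0; intros; reflexivity.
    - replace (a - 1) with ((a - 1) + 0) by ring. apply lim_plus; auto. apply lim_minus; auto. apply lim_const. }
  assert (EW := lim_ev_gt _ _ ((a - 1) / 2) LW ltac:(lra)).
  assert (ClnW : forall n, Cn n (fun v => ln (Wfun f k v))).
  { intros n; apply Cn_ln with (a - 1); auto. lra. apply (ev_imp _ _ EW); intros; lra. }
  assert (EW' : ev (fun v => vb < v /\ (a - 1) / 2 < Wfun f k v)) by (apply ev_and; auto; apply ev_gt).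
  assert (DPhi : ev (fun v => Derive (hlog f) v + Derive (fun v => ln (Wfun f k v)) v = Derive (Phif f k) v)).
  { destruct (ClnW 1%nat) as (_ & Hd & _).
    apply (ev_imp _ _ (ev_and _ _ EW' Hd)). intros v [[A B] C]. unfold Phif. rewrite Derive_plus; auto.
    apply (smooth_ex_derive vb); auto. }
  assert (CPhi : forall n, Cn n (Derive (Phif f k))).
  { intros n; apply Cn_ext with (1 := DPhi). apply Cn_plus; auto.
    destruct (ClnW (S n)) as (_ & _ & _ & C); auto. }
  assert (LPhi : is_lim (Derive (Phif f k)) p_infty (Finite a)).
  { apply lim_ext_ev with (1 := DPhi). replace a with (a + 0) by ring. apply lim_plus; auto.
    destruct (ClnW 1%nat) as (_ & _ & C & _); auto. }
  assert (Ev : ev (fun v => ((vb < v /\ (a - 1) / 2 < Wfun f k v) /\ a / 2 < Derive (Phif f k) v) /\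
                           Derive (Phif f k) v < 2 * a /\ Derive (hlog f) v < 2 * a)).
  { apply ev_and; [apply ev_and; auto|apply ev_and].
    - apply lim_ev_gt with a; auto; lra.
    - apply lim_ev_lt with a; auto; lra.
    - apply lim_ev_lt with a; auto; lra. }
  destruct (ev_ex _ Ev (Rmax vb 0)) as [va [Hva HM]].
  assert (Hva1 : vb <= va) by (apply Rle_trans with (2 := Hva); apply Rmax_l).
  assert (Hva0 : 0 <= va) by (apply Rle_trans with (2 := Hva); apply Rmax_r).
  assert (Wpos : forall v, va < v -> 0 < Wfun f k v).
  { intros v Hv. destruct (HM v Hv) as [[[_ A] _] _]. lra. }
  assert (SW : smooth va (Wfun f k)).
  { intros n. apply smn_ext with (fun x => (fun y => Derive (hlog f) y - 1) x + (fun y => exp (psi y)) x).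
    - intros; reflexivity.
    - apply smn_plus. apply smn_minus; [|apply smn_const].
      apply smn_shift with vb; auto. apply smooth_Derive; auto.
      apply smn_exp_comp. apply smn_shift with vb; auto. }
  assert (SP : smooth va (Phif f k)).
  { intros n. unfold Phif. apply smn_plus. apply smn_shift with vb; auto.
    apply smn_comp with 0; [apply smn_ln| apply SW| auto]. }
  exists va. split; auto. split; auto. split.
  { apply Rlt_le_trans with (exp v0f); auto. destruct (Req_dec v0f va) as [E|E]; [subst; lra|].
    left; apply exp_increasing; lra. }
  split; [apply smooth_shift with vb; auto|]. split; [apply smooth_shift with vb; auto|].
  split; auto. split; auto. split.
  - intros v Hv. destruct (HM v Hv) as [[[A B] C] [D E]].
    assert (Fp : 0 < f (exp v)) by (apply Hfpos; lra).
    assert (Kp : 0 < k (exp v)) by (apply Hkpos; lra).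
    split; auto. split; auto. split; auto. split; [lra|]. split; [lra|].
    assert (DF := Df v ltac:(lra)). split; auto.
    unfold Phif. rewrite exp_plus, exp_ln by (apply Wpos; auto).
    unfold Wfun, hlog. rewrite exp_minus, !exp_ln by auto. rewrite DF.
    fold (hlog f). pose proof (exp_pos v). field. split; lra.
  - repeat split; auto.
Qed.

Lemma solve a b f k zf zk : 1 < a -> b < a -> SR_on zf a f -> SR_on zk b k ->
  exists va (H : R -> R),
    0 <= va /\ smooth zf f /\ zf < exp va /\
    smooth va (hlog f) /\ smooth va (hlog k) /\ smooth va (Wfun f k) /\ smooth va (Phif f k) /\
    (forall v, va < v -> 0 < f (exp v) /\ 0 < k (exp v) /\ (a - 1) / 2 < Wfun f k v /\
        a / 2 <= Derive (Phif f k) v <= 2 * a /\ Derive (hlog f) v <= 2 * a /\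
        Derive f (exp v) = f (exp v) * Derive (hlog f) v / exp v /\
        exp v * Derive f (exp v) - f (exp v) + k (exp v) = exp (Phif f k v)) /\
    is_lim (Wfun f k) p_infty (Finite (a - 1)) /\ is_lim (Derive (hlog f)) p_infty (Finite a) /\
    is_lim (Derive (Phif f k)) p_infty (Finite a) /\
    (forall n, Cn n (Derive (Phif f k))) /\ (forall n, Cn n (Derive (hlog f))) /\
    (forall n, Cn n (Wfun f k)) /\
    is_lim (fun v => hlog k v - hlog f v) p_infty m_infty /\
    (forall w, Phif f k (va + 1) < w -> va + 1 < H w /\ Phif f k (H w) = w) /\
    (forall v, va + 1 < v -> H (Phif f k v) = v) /\
    smooth (Phif f k (va + 1)) H /\
    (forall w, Phif f k (va + 1) < w -> Derive H w = / Derive (Phif f k) (H w)) /\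
    is_lim H p_infty p_infty /\
    (forall n, Cn n (Derive H)) /\ is_lim (Derive H) p_infty (Finite (/ a)).
Proof.
  intros Ha Hb SRf SRk.
  destruct (core a b f k zf zk Ha Hb SRf SRk) as
    (va & Hva & Sf & Hz & Shf & Shk & SW & SP & Hpt & LW & Lf & LP & CP & Cf & CW & Mpsi).
  destruct (inv_fun (Phif f k) va (a / 2) (2 * a)) as (H & HS & HL & SH & DH & LH); auto.
  - lra.
  - intros v Hv; apply Hpt; auto.
  destruct (inv_Cn (Phif f k) H (Phif f k (va + 1)) a) as [CH LDH]; auto; [lra|].
  exists va, H. repeat (split; [assumption|]). repeat split; assumption.
Qed.

Definition gsol (H : R -> R) (L : R) := exp (H (ln (ln L))).

Lemma ln_gt_of_exp_lt c L : exp c < L -> c < ln L.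
Proof.
  intros H. rewrite <- (ln_exp c). apply ln_increasing; auto. apply exp_pos.
Qed.

Lemma lim_lnln : is_lim (fun L => ln (ln L)) p_infty p_infty.
Proof. apply (lim_comp_inf ln ln); apply is_lim_ln_p. Qed.

Lemma sol_at (f k H : R -> R) va L :
  (forall v, va < v -> exp v * Derive f (exp v) - f (exp v) + k (exp v) = exp (Phif f k v)) ->
  (forall w, Phif f k (va + 1) < w -> va + 1 < H w /\ Phif f k (H w) = w) ->
  exp (exp (Phif f k (va + 1))) < L -> sol_eq f k L (gsol H L) /\ va + 1 < H (ln (ln L)).
Proof.
  intros Hid HS HL.
  assert (L1 : exp (Phif f k (va + 1)) < ln L) by (apply ln_gt_of_exp_lt; auto).
  assert (L2 : Phif f k (va + 1) < ln (ln L)) by (apply ln_gt_of_exp_lt; auto).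
  destruct (HS _ L2) as [A B]. split; auto.
  unfold sol_eq, gsol. rewrite Hid by lra. rewrite B. apply exp_ln.
  pose proof (exp_pos (Phif f k (va + 1))); lra.
Qed.

Lemma is_sol (f k H : R -> R) va :
  (forall v, va < v -> exp v * Derive f (exp v) - f (exp v) + k (exp v) = exp (Phif f k v)) ->
  (forall w, Phif f k (va + 1) < w -> va + 1 < H w /\ Phif f k (H w) = w) ->
  (forall v, va + 1 < v -> H (Phif f k v) = v) ->
  is_solution_map f k (exp (exp (Phif f k (va + 1)))) (gsol H).
Proof.
  intros Hid HS HL. exists (exp (va + 1)). intros L HrL.
  destruct (sol_at f k H va L Hid HS HrL) as [S1 S2].
  split; [unfold gsol; apply exp_increasing; auto|]. split; auto.
  intros x Hx Sx. unfold sol_eq in Sx.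
  assert (Hx0 : 0 < x) by (pose proof (exp_pos (va + 1)); lra).
  assert (Hv : va + 1 < ln x) by (apply ln_gt_of_exp_lt; auto).
  rewrite <- (exp_ln x Hx0) in Sx. rewrite Hid in Sx by lra.
  assert (E : Phif f k (ln x) = ln (ln L)) by (rewrite <- Sx, ln_exp; auto).
  unfold gsol. rewrite <- E, HL by auto. rewrite exp_ln; auto.
Qed.

Lemma sol_ev (f k H g' : R -> R) va r' :
  (forall v, va < v -> exp v * Derive f (exp v) - f (exp v) + k (exp v) = exp (Phif f k v)) ->
  (forall w, Phif f k (va + 1) < w -> va + 1 < H w /\ Phif f k (H w) = w) ->
  is_lim H p_infty p_infty -> is_solution_map f k r' g' -> ev (fun L => g' L = gsol H L).
Proof.
  intros Hid HS LH [xo Hxo].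
  assert (Lg : is_lim (gsol H) p_infty p_infty).
  { unfold gsol. apply (lim_comp_inf exp (fun L => H (ln (ln L)))). apply is_lim_exp_p.
    apply (lim_comp_inf H (fun L => ln (ln L))); auto. apply lim_lnln. }
  apply is_lim_spec in Lg. destruct (Lg xo) as [M1 HM1].
  exists (Rmax (Rmax r' M1) (exp (exp (Phif f k (va + 1))))). intros L HL.
  assert (A1 := Rmax_l (Rmax r' M1) (exp (exp (Phif f k (va + 1))))).
  assert (A2 := Rmax_r (Rmax r' M1) (exp (exp (Phif f k (va + 1))))).
  assert (A3 := Rmax_l r' M1). assert (A4 := Rmax_r r' M1).
  destruct (sol_at f k H va L Hid HS ltac:(lra)) as [S1 S2].
  destruct (Hxo L ltac:(lra)) as (B1 & B2 & B3).
  symmetry; apply B3; auto. apply HM1; lra.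
Qed.

Lemma SR_concl (h h2 : R -> R) l : ev (fun u => h u = h2 u) -> (forall n, Cn n (Derive h2)) ->
  is_lim (Derive h2) p_infty (Finite l) ->
  is_lim (Derive h) p_infty (Finite l) /\ forall m, (2 <= m)%nat -> is_lim (Derive_n h m) p_infty (Finite 0).
Proof.
  intros [M HM] Cn2 L2.
  assert (E : forall m, ev (fun u => Derive_n h2 m u = Derive_n h m u)).
  { intros m. exists M; intros x Hx. apply Derive_n_ext_loc. apply (loc_ev_gt _ M); auto.
    intros; symmetry; auto. }
  split.
  - apply lim_ext_ev with (1 := E 1%nat). exact L2.
  - intros m Hm. apply lim_ext_ev with (1 := E m).
    destruct m as [|m]; [lia|].
    apply is_lim_ext with (Derive_n (Derive h2) m).
    + intros; apply Dn_S.
    + apply Cn_lim_Dn with m; auto. lia.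
Qed.

Lemma ln_pos_gt x : 1 < x -> 0 < ln x.
Proof. intros H. rewrite <- ln_1. apply ln_increasing; lra. Qed.

Lemma smooth_lnln r : 1 < r -> smooth r (fun L => ln (ln L)).
Proof.
  intros Hr n. apply smn_comp with 0. apply smn_ln. apply smn_shift with 0; [lra|apply smn_ln].
  intros; apply ln_pos_gt; lra.
Qed.

Lemma SR_g a c (H : R -> R) : 1 < a -> smooth c H -> (forall n, Cn n (Derive H)) ->
  is_lim (Derive H) p_infty (Finite (/ a)) -> is_lim H p_infty p_infty ->
  SR_on (exp (exp c)) 0 (gsol H) /\ SR_on (ln (exp (exp c))) (1 / a) (fun L => gsol H (exp L)).
Proof.
  intros Ha SH CH LDH LH. rewrite ln_exp.
  set (r := exp (exp c)).
  assert (Hr : 1 < r).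
  { unfold r. rewrite <- exp_0. apply exp_increasing. apply exp_pos. }
  assert (Sg : smooth r (gsol H)).
  { intros n. unfold gsol. apply smn_exp_comp. apply smn_comp with c; auto.
    apply smooth_lnln; auto. intros L HL. apply ln_gt_of_exp_lt. apply ln_gt_of_exp_lt. auto. }
  assert (gpos : forall L, 0 < gsol H L) by (intros; apply exp_pos).
  split.
  - split; [apply smooth_ex_derive_n; auto|]. split.
    + exists 0; intros x _ Hx; pose proof (gpos x); lra.
    + simpl.
      assert (Ln : is_lim (fun u => ln u) p_infty p_infty) by apply is_lim_ln_p.
      assert (Edl : ev (fun x : R => ex_derive ln x)).
      { exists 0; intros; eexists; apply is_derive_ln; auto. }
      assert (CDl : forall n, Cn n (Derive ln)).
      { intros n; apply Cn_ext with (fun x => / x). exists 0; intros; symmetry; apply is_derive_unique, is_derive_ln; auto.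
        apply Cn_recip. }
      assert (EH : ev (fun u => / u * Derive H (ln u) = Derive (fun u => H (ln u)) u)).
      { exists (exp c); intros u Hu. assert (0 < u) by (pose proof (exp_pos c); lra).
        rewrite (Derive_comp H ln u).
        - rewrite (is_derive_unique ln u (/ u)); auto. apply is_derive_ln; auto.
        - apply (smooth_ex_derive c); auto. apply ln_gt_of_exp_lt; auto.
        - eexists; apply is_derive_ln; auto. }
      apply (SR_concl _ (fun u => H (ln u)) 0).
      * exists (ln r); intros u Hu. unfold gsol. rewrite ln_exp, ln_exp. reflexivity.
      * intros n. apply Cn_ext with (1 := EH). apply Cn_mult. apply Cn_recip.
        apply (Cn_comp_gen n ln); auto.
      * apply lim_ext_ev with (1 := EH). replace 0 with (0 * / a) by ring.
        apply lim_mult. apply lim_recip. apply (lim_comp_inf (Derive H) ln); auto.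
  - split.
    + apply smooth_ex_derive_n. intros n. apply smn_comp with r; [apply Sg|apply smn_exp|].
      intros x Hx. unfold r. apply exp_increasing; auto.
    + split.
      * exists 0; intros x _ Hx; pose proof (gpos (exp x)); lra.
      * simpl. apply (SR_concl _ H).
        -- exists 0; intros u _. unfold gsol. rewrite !ln_exp. reflexivity.
        -- auto.
        -- unfold Rdiv; rewrite Rmult_1_l; auto.
Qed.

Lemma lim_alongH (H P : R -> R) l : is_lim H p_infty p_infty -> is_lim P p_infty l ->
  is_lim (fun L => P (H (ln (ln L)))) p_infty l.
Proof.
  intros LH LP. apply (lim_comp_inf P (fun L => H (ln (ln L)))); auto.
  apply (lim_comp_inf H (fun L => ln (ln L))); auto. apply lim_lnln.
Qed.

Lemma part_iii a (f k : R -> R) va (H : R -> R) :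
  1 < a ->
  (forall v, va < v -> 0 < f (exp v) /\ 0 < k (exp v) /\ (a - 1) / 2 < Wfun f k v /\
        a / 2 <= Derive (Phif f k) v <= 2 * a /\ Derive (hlog f) v <= 2 * a /\
        Derive f (exp v) = f (exp v) * Derive (hlog f) v / exp v /\
        exp v * Derive f (exp v) - f (exp v) + k (exp v) = exp (Phif f k v)) ->
  is_lim (Wfun f k) p_infty (Finite (a - 1)) -> is_lim (Derive (hlog f)) p_infty (Finite a) ->
  (forall w, Phif f k (va + 1) < w -> va + 1 < H w /\ Phif f k (H w) = w) ->
  smooth (Phif f k (va + 1)) H -> is_lim H p_infty p_infty -> is_lim (Derive H) p_infty (Finite (/ a)) ->
  let g := gsol H in
  is_lim (fun L => Derive g L * L * ln L / g L) p_infty (Finite (1 / a)) /\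
  is_lim (fun L => f (g L) / ln L) p_infty (Finite (1 / (a - 1))) /\
  is_lim (fun L => g L * Derive f (g L) / ln L) p_infty (Finite (a / (a - 1))) /\
  is_lim (fun L => (g L * Derive f (g L) - f (g L)) / ln L) p_infty (Finite 1).
Proof.
  intros Ha Hpt LW Lf HS SH LH LDH g. set (c := Phif f k (va + 1)).
  set (r := exp (exp c)).
  assert (Key : forall L, r < L ->
     let v := H (ln (ln L)) in va + 1 < v /\ g L = exp v /\ ln L = f (exp v) * Wfun f k v /\
       0 < f (exp v) /\ 0 < Wfun f k v /\ Derive f (exp v) = f (exp v) * Derive (hlog f) v / exp v).
  { intros L HL v.
    assert (L1 : exp c < ln L) by (apply ln_gt_of_exp_lt; auto).
    assert (L2 : c < ln (ln L)) by (apply ln_gt_of_exp_lt; auto).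
    destruct (HS _ L2) as [A B]. fold v in A, B.
    destruct (Hpt v ltac:(lra)) as (P1 & P2 & P3 & P4 & P5 & P6 & P7).
    assert (Wp : 0 < Wfun f k v) by lra.
    split; auto. split; [reflexivity|]. split; [|split; [auto|split; auto]].
    rewrite <- (exp_ln (ln L)) by (pose proof (exp_pos c); lra). rewrite <- B.
    unfold Phif. rewrite exp_plus, exp_ln by auto. unfold hlog. rewrite exp_ln; auto. }
  split; [|split; [|split]].
  - apply lim_ext_ev with (fun L => Derive H (ln (ln L))).
    + exists r; intros L HL. destruct (Key L HL) as (A & B & C & D & E & F).
      assert (L1 : exp c < ln L) by (apply ln_gt_of_exp_lt; auto).
      assert (L2 : c < ln (ln L)) by (apply ln_gt_of_exp_lt; auto).
      assert (Lp : 0 < ln L) by (pose proof (exp_pos c); lra).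
      assert (Lp' : 0 < L) by (pose proof (exp_pos (exp c)); unfold r in HL; lra).
      assert (Dl : is_derive (fun L => ln (ln L)) L (/ ln L * / L)).
      { replace (/ ln L * / L) with (/ L * / ln L) by ring.
        apply (is_derive_comp ln ln L (/ ln L) (/ L)). apply is_derive_ln; auto. apply is_derive_ln; auto. }
      assert (DH : is_derive H (ln (ln L)) (Derive H (ln (ln L)))).
      { apply Derive_correct. apply (smooth_ex_derive c); auto. }
      assert (Dg : is_derive g L ((/ ln L * / L) * Derive H (ln (ln L)) * g L)).
      { unfold g, gsol. apply (is_derive_comp exp (fun L => H (ln (ln L))) L).
        apply is_derive_exp. apply (is_derive_comp H (fun L => ln (ln L)) L); auto. }
      rewrite (is_derive_unique _ _ _ Dg). pose proof (exp_pos (H (ln (ln L)))).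
      unfold g, gsol in *. field. split; lra.
    + unfold Rdiv; rewrite Rmult_1_l. apply (lim_comp_inf (Derive H) (fun L => ln (ln L))); auto. apply lim_lnln.
  - apply lim_ext_ev with (fun L => / Wfun f k (H (ln (ln L)))).
    + exists r; intros L HL. destruct (Key L HL) as (A & B & C & D & E & F).
      set (v := H (ln (ln L))) in *. rewrite B, C. field. split; lra.
    + unfold Rdiv; rewrite Rmult_1_l. apply (lim_alongH H (fun v => / Wfun f k v)); auto.
      apply lim_inv; auto; lra.
  - apply lim_ext_ev with (fun L => Derive (hlog f) (H (ln (ln L))) * / Wfun f k (H (ln (ln L)))).
    + exists r; intros L HL. destruct (Key L HL) as (A & B & C & D & E & F).
      set (v := H (ln (ln L))) in *. rewrite B, C, F. pose proof (exp_pos v). field. repeat split; lra.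
    + apply (lim_alongH H (fun v => Derive (hlog f) v * / Wfun f k v)); auto.
      apply lim_mult; auto. apply lim_inv; auto; lra.
  - apply lim_ext_ev with (fun L => (Derive (hlog f) (H (ln (ln L))) - 1) * / Wfun f k (H (ln (ln L)))).
    + exists r; intros L HL. destruct (Key L HL) as (A & B & C & D & E & F).
      set (v := H (ln (ln L))) in *. rewrite B, C, F. pose proof (exp_pos v). field. repeat split; lra.
    + apply (lim_alongH H (fun v => (Derive (hlog f) v - 1) * / Wfun f k v)); auto.
      replace (Finite 1) with (Finite ((a - 1) * / (a - 1))) by (f_equal; field; lra).
      apply lim_mult. apply lim_minus; auto. apply lim_const. apply lim_inv; auto; lra.
Qed.

Lemma ln_le_mono x y : 0 < x -> x <= y -> ln x <= ln y.
Proof. intros H [E|E]; [left; apply ln_increasing; auto| subst; lra]. Qed.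

Lemma exp_le_mono x y : x <= y -> exp x <= exp y.
Proof. intros [E|E]; [left; apply exp_increasing; auto| subst; lra]. Qed.

Lemma Rabs_le_inv x b : Rabs x <= b -> - b <= x <= b.
Proof. unfold Rabs; destruct (Rcase_abs x); intros; lra. Qed.

Lemma abs_mvt (p : R -> R) a b B :
  (forall y, Rmin a b <= y <= Rmax a b -> ex_derive p y /\ Rabs (Derive p y) <= B) ->
  Rabs (p b - p a) <= B * Rabs (b - a).
Proof.
  intros H. destruct (mvt p a b) as [c [Hc E]].
  - intros; apply H; auto.
  - rewrite E, Rabs_mult. apply Rmult_le_compat_r; [apply Rabs_pos|]. apply H; auto.
Qed.

Lemma exp_near0 d : Rabs d <= 1 -> Rabs (exp d - 1) <= 3 * Rabs d.
Proof.
  intros Hd. rewrite <- exp_0. replace d with (d - 0) at 2 by ring.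
  apply abs_mvt. intros y Hy. split; [eexists; apply is_derive_exp|].
  rewrite (is_derive_unique exp y (exp y)) by apply is_derive_exp.
  rewrite Rabs_right by (left; apply exp_pos).
  apply Rle_trans with (exp 1); [apply exp_le_mono|apply exp_le_3].
  apply Rabs_le_inv in Hd. destruct (Rle_or_lt d 0).
  - rewrite Rmax_left in Hy; lra.
  - rewrite Rmax_right in Hy; lra.
Qed.

Definition Mx (f : R -> R) (v : R) := exp (hlog f v - v) * Derive (hlog f) v.

Lemma part_ii a (f k : R -> R) va (H : R -> R) :
  1 < a -> smooth va (hlog f) -> (forall n, Cn n (Derive (hlog f))) ->
  (forall v, va < v -> 0 < f (exp v) /\ 0 < k (exp v) /\ (a - 1) / 2 < Wfun f k v /\
        a / 2 <= Derive (Phif f k) v <= 2 * a /\ Derive (hlog f) v <= 2 * a /\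
        Derive f (exp v) = f (exp v) * Derive (hlog f) v / exp v /\
        exp v * Derive f (exp v) - f (exp v) + k (exp v) = exp (Phif f k v)) ->
  is_lim (Wfun f k) p_infty (Finite (a - 1)) -> is_lim (Derive (hlog f)) p_infty (Finite a) ->
  is_lim (Derive (Phif f k)) p_infty (Finite a) ->
  (forall w, Phif f k (va + 1) < w -> va + 1 < H w /\ Phif f k (H w) = w) ->
  smooth (Phif f k (va + 1)) H ->
  (forall w, Phif f k (va + 1) < w -> Derive H w = / Derive (Phif f k) (H w)) ->
  is_lim H p_infty p_infty ->
  forall gamma delta : R, 0 < gamma -> 0 < delta ->
  exists z : R, exp (exp (Phif f k (va + 1))) < z /\
    forall L y : R, z < L ->
      Rpower (ln L) (- gamma) <= y <= Rpower (ln L) gamma ->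
      Rabs (gsol H L * (Derive f (gsol H (y * L)) - Derive f (gsol H L)) - ln y)
        <= delta * Rabs (ln y).
Proof.
  intros Ha Shf Cf Hpt LW Lf LP HS SH DH LH gamma delta Hg Hd.
  set (c := Phif f k (va + 1)).
  assert (Hddf : is_lim (Derive (Derive (hlog f))) p_infty (Finite 0)).
  { destruct (Cf 1%nat) as (_ & _ & X & _); exact X. }
  set (N := fun v => (Derive (hlog f) v - 1) * Derive (hlog f) v + Derive (Derive (hlog f)) v).
  set (rho := fun v => N v * / (Wfun f k v * Derive (Phif f k) v)).
  assert (Lrho : is_lim rho p_infty (Finite 1)).
  { unfold rho, N. replace (Finite 1) with (Finite (((a - 1) * a + 0) * / ((a - 1) * a)))
      by (f_equal; field; lra).
    apply lim_mult. apply lim_plus; auto. apply lim_mult; auto. apply lim_minus; auto. apply lim_const.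
    apply lim_inv. apply lim_mult; auto. apply Rmult_integral_contrapositive; lra. }
  assert (DMx : forall v, va < v -> is_derive (Mx f) v (exp (hlog f v - v) * N v)).
  { intros v Hv. unfold Mx, N.
    assert (E1 : ex_derive (hlog f) v) by (apply (smooth_ex_derive va); auto).
    assert (E2 : ex_derive (Derive (hlog f)) v) by (apply (smooth_ex_derive va); auto; apply smooth_Derive; auto).
    auto_derive.
    - change (fun x => hlog f x) with (hlog f). change (fun x => Derive (hlog f) x) with (Derive (hlog f)). auto.
    - change (fun x => hlog f x) with (hlog f). change (fun x => Derive (hlog f) x) with (Derive (hlog f)).
      unfold Rminus. ring. }
  assert (EMx : forall v, va < v -> Derive f (exp v) = Mx f v).
  { intros v Hv. destruct (Hpt v Hv) as (P1 & _ & _ & _ & _ & P6 & _). rewrite P6. unfold Mx, hlog.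
    rewrite exp_minus, exp_ln by auto. field. apply Rgt_not_eq, exp_pos. }
  set (mt := fun tau => Mx f (H (ln tau))).
  set (Gam := fun tau => exp (H (ln tau))).
  assert (Dmt : forall tau, exp c < tau -> ex_derive mt tau /\ Gam tau * Derive mt tau = rho (H (ln tau))).
  { intros tau Ht.
    assert (Tp : 0 < tau) by (pose proof (exp_pos c); lra).
    assert (Hs : c < ln tau) by (apply ln_gt_of_exp_lt; auto).
    destruct (HS _ Hs) as [A B].
    set (v := H (ln tau)) in *.
    destruct (Hpt v ltac:(lra)) as (P1 & P2 & P3 & P4 & P5 & P6 & P7).
    assert (DHl : is_derive (fun t => H (ln t)) tau (/ tau * Derive H (ln tau))).
    { apply (is_derive_comp H ln tau). apply Derive_correct, (smooth_ex_derive c); auto.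
      apply is_derive_ln; auto. }
    assert (Dm : is_derive mt tau ((/ tau * Derive H (ln tau)) * (exp (hlog f v - v) * N v))).
    { apply (is_derive_comp (Mx f) (fun t => H (ln t)) tau); auto. apply DMx; lra. }
    split; [eexists; exact Dm|].
    rewrite (is_derive_unique _ _ _ Dm). rewrite DH by auto. fold v.
    assert (Et : tau = exp (hlog f v) * Wfun f k v).
    { rewrite <- (exp_ln tau Tp). rewrite <- B. unfold Phif. rewrite exp_plus, exp_ln by lra. reflexivity. }
    unfold Gam, rho. fold v. rewrite exp_minus. rewrite Et.
    pose proof (exp_pos v). pose proof (exp_pos (hlog f v)). field. repeat split; lra. }
  assert (LipH : forall x y, c < x -> c < y -> Rabs (H y - H x) <= (2 / a) * Rabs (y - x)).
  { intros x y Hx Hy. apply abs_mvt. intros u Hu.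
    assert (Hu' : c < u) by (destruct (Rle_or_lt x y); [rewrite Rmin_left in Hu| rewrite Rmin_right in Hu]; lra).
    split; [apply (smooth_ex_derive c); auto|].
    rewrite DH by auto. destruct (HS u Hu') as [A B]. destruct (Hpt (H u) ltac:(lra)) as (_ & _ & _ & P4 & _).
    rewrite Rabs_right by (left; apply Rinv_0_lt_compat; lra).
    replace (2 / a) with (/ (a / 2)) by (field; lra). apply Rinv_le_contravar; lra. }
  destruct (lim_ev 1 rho Lrho (delta / 6) ltac:(lra)) as [V1 HV1].
  set (d0 := Rmin 1 (delta / 6)).
  assert (Hd0 : 0 < d0) by (apply Rmin_pos; lra).
  assert (Hd01 : d0 <= 1) by apply Rmin_l. assert (Hd02 : d0 <= delta / 6) by apply Rmin_r.
  assert (LH' := LH). apply is_lim_spec in LH'. destruct (LH' V1) as [S1 HS1].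
  set (eps1 := Rmin (1 / (2 * gamma)) (a * d0 / (4 * gamma))).
  assert (He1 : 0 < eps1).
  { apply Rmin_pos; apply Rdiv_lt_0_compat; try lra. apply Rmult_lt_0_compat; lra. }
  destruct (lim_ev 0 (fun l => ln l / l) is_lim_div_ln_p eps1 He1) as [l1 Hl1].
  set (K := Rmax (Rmax (exp S1) (exp c)) 1).
  assert (K1 : exp S1 <= K) by (unfold K; apply Rle_trans with (2 := Rmax_l _ _); apply Rmax_l).
  assert (K2 : exp c <= K) by (unfold K; apply Rle_trans with (2 := Rmax_l _ _); apply Rmax_r).
  assert (K3 : 1 <= K) by (unfold K; apply Rmax_r).
  set (l0 := Rmax (Rmax l1 (2 * K)) 1).
  assert (L01 : l1 <= l0) by (unfold l0; apply Rle_trans with (2 := Rmax_l _ _); apply Rmax_l).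
  assert (L02 : 2 * K <= l0) by (unfold l0; apply Rle_trans with (2 := Rmax_l _ _); apply Rmax_r).
  exists (Rmax (exp l0) (exp (exp c)) + 1). split.
  { pose proof (Rmax_r (exp l0) (exp (exp c))). lra. }
  intros L y HL Hy.
  assert (HL1 : exp l0 < L) by (pose proof (Rmax_l (exp l0) (exp (exp c))); lra).
  assert (Lp : 0 < L) by (pose proof (exp_pos l0); lra).
  set (l := ln L) in *.
  assert (Hl : l0 < l) by (apply ln_gt_of_exp_lt; auto).
  assert (Hlp : 0 < ln l) by (apply ln_pos_gt; lra).
  assert (Hlr : ln l < eps1 * l).
  { specialize (Hl1 l ltac:(lra)). apply Rabs_def2 in Hl1. destruct Hl1 as [Hl1 _].
    rewrite Rminus_0_r in Hl1. apply Rmult_lt_reg_r with (/ l). apply Rinv_0_lt_compat; lra.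
    replace (eps1 * l * / l) with eps1 by (field; lra). exact Hl1. }
  assert (Hg1 : gamma * ln l < l / 2).
  { assert (eps1 <= 1 / (2 * gamma)) by apply Rmin_l.
    assert (gamma * eps1 <= 1 / 2).
    { apply Rle_trans with (gamma * (1 / (2 * gamma))). apply Rmult_le_compat_l; lra. right; field; lra. }
    assert (gamma * ln l < gamma * (eps1 * l)) by (apply Rmult_lt_compat_l; lra).
    assert (gamma * eps1 * l <= 1 / 2 * l) by (apply Rmult_le_compat_r; lra). lra. }
  assert (Hg2 : gamma * ln l <= a * d0 / 4 * l).
  { assert (eps1 <= a * d0 / (4 * gamma)) by apply Rmin_r.
    assert (gamma * eps1 <= a * d0 / 4).
    { apply Rle_trans with (gamma * (a * d0 / (4 * gamma))). apply Rmult_le_compat_l; lra. right; field; lra. }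
    assert (gamma * ln l <= gamma * (eps1 * l)) by (apply Rmult_le_compat_l; lra).
    assert (gamma * eps1 * l <= a * d0 / 4 * l) by (apply Rmult_le_compat_r; lra). lra. }
  unfold Rpower in Hy. fold l in Hy.
  assert (Yp : 0 < y) by (pose proof (exp_pos (- gamma * ln l)); lra).
  set (t := ln y).
  assert (Ht : - (gamma * ln l) <= t <= gamma * ln l).
  { split.
    - replace (- (gamma * ln l)) with (ln (exp (- gamma * ln l))) by (rewrite ln_exp; ring).
      apply ln_le_mono; [apply exp_pos| lra].
    - replace (gamma * ln l) with (ln (exp (gamma * ln l))) by (rewrite ln_exp; ring).
      apply ln_le_mono; lra. }
  assert (Hta : Rabs t <= gamma * ln l) by (apply Rabs_le; lra).
  assert (Hdom : forall u, Rmin l (t + l) <= u -> l / 2 < u).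
  { intros u Hu. destruct (Rle_or_lt l (t + l)); [rewrite Rmin_left in Hu| rewrite Rmin_right in Hu]; lra. }
  assert (Hgl : gsol H L = Gam l) by reflexivity.
  assert (Hgy : gsol H (y * L) = Gam (t + l)).
  { unfold gsol, Gam. rewrite ln_mult by auto. reflexivity. }
  assert (Dom1 : forall u, l / 2 < u -> exp c < u /\ exp S1 < u) by (intros; lra).
  assert (Em : forall u, l / 2 < u -> Derive f (Gam u) = mt u).
  { intros u Hu. destruct (Dom1 u Hu) as [A _].
    assert (Hs : c < ln u) by (apply ln_gt_of_exp_lt; auto). destruct (HS _ Hs) as [B _].
    unfold Gam, mt. apply EMx. lra. }
  rewrite Hgl, Hgy, Em, Em by (first [lra | apply Hdom; first [apply Rmin_r | apply Rmin_l]]).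
  fold t.
  destruct (mvt mt l (t + l)) as [tau [Htau Emt]].
  { intros u Hu. apply Dmt. apply Dom1. apply Hdom. lra. }
  assert (Htau2 : l / 2 < tau) by (apply Hdom; lra).
  destruct (Dom1 tau Htau2) as [T1 T2].
  destruct (Dmt tau T1) as [_ Gm].
  rewrite Emt. replace (t + l - l) with t by ring.
  set (dd := H (ln l) - H (ln tau)).
  assert (EG : Gam l = exp dd * Gam tau).
  { unfold Gam, dd. rewrite <- exp_plus. f_equal; ring. }
  assert (Exp : Gam l * (Derive mt tau * t) - t = t * (exp dd * rho (H (ln tau)) - 1)).
  { rewrite EG, <- Gm. ring. }
  rewrite Exp, Rabs_mult, Rmult_comm. apply Rmult_le_compat_r; [apply Rabs_pos|].
  assert (Hlt : Rabs (ln tau - ln l) <= (2 / l) * Rabs (tau - l)).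
  { apply abs_mvt. intros u Hu.
    assert (Hu2 : l / 2 < u).
    { destruct (Rle_or_lt l tau); [rewrite Rmin_left in Hu| rewrite Rmin_right in Hu]; lra. }
    split; [eexists; apply is_derive_ln; lra|].
    rewrite (is_derive_unique ln u (/ u)) by (apply is_derive_ln; lra).
    rewrite Rabs_right by (left; apply Rinv_0_lt_compat; lra).
    replace (2 / l) with (/ (l / 2)) by (field; lra). apply Rinv_le_contravar; lra. }
  assert (Htl : Rabs (tau - l) <= Rabs t).
  { destruct (Rle_or_lt l (t + l)).
    - rewrite Rmin_left, Rmax_right in Htau by lra. rewrite !Rabs_right; lra.
    - rewrite Rmin_right, Rmax_left in Htau by lra. rewrite Rabs_left1, Rabs_left; lra. }
  assert (Hc1 : c < ln l) by (apply ln_gt_of_exp_lt; lra).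
  assert (Hc2 : c < ln tau) by (apply ln_gt_of_exp_lt; lra).
  assert (Hdd : Rabs dd <= d0).
  { unfold dd. rewrite <- Rabs_Ropp. replace (- (H (ln l) - H (ln tau))) with (H (ln tau) - H (ln l)) by ring.
    apply Rle_trans with ((2 / a) * Rabs (ln tau - ln l)); [apply LipH; auto|].
    apply Rle_trans with ((2 / a) * ((2 / l) * (gamma * ln l))).
    - apply Rmult_le_compat_l; [apply Rlt_le, Rdiv_lt_0_compat; lra|].
      apply Rle_trans with (1 := Hlt). apply Rmult_le_compat_l; [apply Rlt_le, Rdiv_lt_0_compat; lra|]. lra.
    - replace ((2 / a) * ((2 / l) * (gamma * ln l))) with ((4 / (a * l)) * (gamma * ln l)) by (field; lra).
      apply Rle_trans with ((4 / (a * l)) * (a * d0 / 4 * l)).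
      + apply Rmult_le_compat_l; auto. apply Rlt_le, Rdiv_lt_0_compat; [lra| apply Rmult_lt_0_compat; lra].
      + right; field; lra. }
  assert (Hrho : Rabs (rho (H (ln tau)) - 1) < delta / 6).
  { apply HV1. apply HS1. apply ln_gt_of_exp_lt; lra. }
  assert (He : Rabs (exp dd - 1) <= delta / 2).
  { apply Rle_trans with (3 * Rabs dd). apply exp_near0; lra. lra. }
  assert (He3 : exp dd <= 3).
  { apply Rle_trans with (exp 1); [apply exp_le_mono| apply exp_le_3]. apply Rabs_le_inv in Hdd; lra. }
  replace (exp dd * rho (H (ln tau)) - 1) with (exp dd * (rho (H (ln tau)) - 1) + (exp dd - 1)) by ring.
  apply Rle_trans with (1 := Rabs_triang _ _). rewrite Rabs_mult, (Rabs_right (exp dd)) by (left; apply exp_pos).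
  assert (exp dd * Rabs (rho (H (ln tau)) - 1) <= 3 * (delta / 6)).
  { apply Rmult_le_compat; try lra. left; apply exp_pos. apply Rabs_pos. }
  lra.
Qed.

Lemma lim_squeeze0 (X Dd : R -> R) C : 0 <= C -> ev (fun L => Rabs (X L) <= C * Rabs (Dd L)) ->
  is_lim Dd p_infty (Finite 0) -> is_lim X p_infty (Finite 0).
Proof.
  intros HC [M HM] HD. apply is_lim_spec. intros eps.
  assert (He : 0 < eps / (C + 1)) by (apply Rdiv_lt_0_compat; [apply cond_pos| lra]).
  destruct (lim_ev 0 Dd HD _ He) as [M2 HM2]. exists (Rmax M M2). intros x Hx.
  assert (A1 := Rmax_l M M2). assert (A2 := Rmax_r M M2).
  specialize (HM x ltac:(lra)). specialize (HM2 x ltac:(lra)). rewrite Rminus_0_r in *.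
  apply Rle_lt_trans with (1 := HM).
  apply Rle_lt_trans with ((C + 1) * Rabs (Dd x)).
  - apply Rmult_le_compat_r; [apply Rabs_pos| lra].
  - apply Rmult_lt_reg_l with (/ (C + 1)). apply Rinv_0_lt_compat; lra.
    rewrite <- Rmult_assoc, Rinv_l, Rmult_1_l by lra. rewrite Rmult_comm. exact HM2.
Qed.

Lemma lim_exp0 (X : R -> R) : is_lim X p_infty (Finite 0) -> is_lim (fun L => exp (X L)) p_infty (Finite 1).
Proof.
  intros H. rewrite <- exp_0. apply (is_lim_comp_continuous X exp p_infty 0 H).
  apply cont_exd. eexists; apply is_derive_exp.
Qed.

Lemma lim_ge_pinf (u w : R -> R) : ev (fun L => u L <= w L) -> is_lim u p_infty p_infty ->
  is_lim w p_infty p_infty.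
Proof.
  intros [M HM] Hu. apply is_lim_spec. apply is_lim_spec in Hu. intros K.
  destruct (Hu K) as [M2 HM2]. exists (Rmax M M2). intros x Hx.
  assert (A1 := Rmax_l M M2). assert (A2 := Rmax_r M M2).
  specialize (HM x ltac:(lra)). specialize (HM2 x ltac:(lra)). lra.
Qed.

Definition Nf (f : R -> R) (v : R) :=
  (Derive (hlog f) v - 1) * Derive (hlog f) v + Derive (Derive (hlog f)) v.

Lemma DMx_lemma (f : R -> R) va : smooth va (hlog f) ->
  forall v, va < v -> is_derive (Mx f) v (exp (hlog f v - v) * Nf f v).
Proof.
  intros Shf v Hv. unfold Mx, Nf.
  assert (E1 : ex_derive (hlog f) v) by (apply (smooth_ex_derive va); auto).
  assert (E2 : ex_derive (Derive (hlog f)) v) by (apply (smooth_ex_derive va); auto; apply smooth_Derive; auto).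
  auto_derive.
  - change (fun x => hlog f x) with (hlog f). change (fun x => Derive (hlog f) x) with (Derive (hlog f)). auto.
  - change (fun x => hlog f x) with (hlog f). change (fun x => Derive (hlog f) x) with (Derive (hlog f)).
    unfold Rminus. ring.
Qed.

Lemma EMx_lemma (f : R -> R) v : 0 < f (exp v) ->
  Derive f (exp v) = f (exp v) * Derive (hlog f) v / exp v -> Derive f (exp v) = Mx f v.
Proof.
  intros P1 P6. rewrite P6. unfold Mx, hlog.
  rewrite exp_minus, exp_ln by auto. field. apply Rgt_not_eq, exp_pos.
Qed.

Lemma abs_lb (p : R -> R) va c1 x y : 0 < c1 -> smooth va p -> (forall v, va < v -> c1 <= Derive p v) ->
  va < x -> va < y -> c1 * Rabs (y - x) <= Rabs (p y - p x).
Proof.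
  intros Hc Hs Hd Hx Hy. destruct (Rle_or_lt x y) as [C|C].
  - pose proof (incr_of_deriv p va c1 Hc Hs Hd x y Hx C).
    rewrite !Rabs_right; try lra. assert (0 <= c1 * (y - x)) by (apply Rmult_le_pos; lra). lra.
  - pose proof (incr_of_deriv p va c1 Hc Hs Hd y x Hy (Rlt_le _ _ C)).
    rewrite (Rabs_left (y - x)) by lra. rewrite Rabs_left1.
    + lra.
    + assert (0 <= c1 * (x - y)) by (apply Rmult_le_pos; lra). lra.
Qed.

Lemma lim_between_inf (u w z : R -> R) : ev (fun L => Rmin (u L) (w L) <= z L) ->
  is_lim u p_infty p_infty -> is_lim w p_infty p_infty -> is_lim z p_infty p_infty.
Proof.
  intros [M HM] Hu Hw. apply is_lim_spec. apply is_lim_spec in Hu. apply is_lim_spec in Hw. intros K.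
  destruct (Hu K) as [M1 H1]. destruct (Hw K) as [M2 H2].
  exists (Rmax M (Rmax M1 M2)). intros x Hx.
  assert (A1 := Rmax_l M (Rmax M1 M2)). assert (A2 := Rmax_r M (Rmax M1 M2)).
  assert (A3 := Rmax_l M1 M2). assert (A4 := Rmax_r M1 M2).
  specialize (HM x ltac:(lra)). specialize (H1 x ltac:(lra)). specialize (H2 x ltac:(lra)).
  destruct (Rle_or_lt (u x) (w x)); [rewrite Rmin_left in HM| rewrite Rmin_right in HM]; lra.
Qed.

Lemma between_abs x y z : Rmin x y <= z <= Rmax x y -> Rabs (y - z) <= Rabs (y - x) /\ Rabs (x - z) <= Rabs (y - x).
Proof.
  intros H. destruct (Rle_or_lt x y) as [C|C].
  - rewrite Rmin_left, Rmax_right in H by lra. split; unfold Rabs; repeat destruct Rcase_abs; lra.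
  - rewrite Rmin_right, Rmax_left in H by lra.
    split; unfold Rabs; repeat destruct Rcase_abs; lra.
Qed.

Lemma between2_abs x y z w : Rmin x y <= z <= Rmax x y -> Rmin x y <= w <= Rmax x y ->
  Rabs (z - w) <= Rabs (y - x).
Proof.
  intros H1 H2. destruct (Rle_or_lt x y) as [C|C].
  - rewrite Rmin_left, Rmax_right in * by lra. unfold Rabs; repeat destruct Rcase_abs; lra.
  - rewrite Rmin_right, Rmax_left in * by lra. unfold Rabs; repeat destruct Rcase_abs; lra.
Qed.

Lemma part_iv a b (f k0 k1 : R -> R) zf zk0 zk1 c r0 r1 (g0 g1 : R -> R) :
  1 < a -> b < a -> SR_on zf a f -> SR_on zk0 b k0 -> SR_on zk1 b k1 ->
  is_lim (fun L => k1 L - k0 L) p_infty (Finite c) ->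
  is_solution_map f k0 r0 g0 -> is_solution_map f k1 r1 g1 ->
  is_lim (fun L => g0 L * (Derive f (g0 L) - Derive f (g1 L))) p_infty (Finite c) /\
  is_lim (fun L => g1 L * (Derive f (g0 L) - Derive f (g1 L))) p_infty (Finite c).
Proof.
  intros Ha Hb SRf SR0 SR1 Lk Sol0 Sol1.
  destruct (solve a b f k0 zf zk0 Ha Hb SRf SR0) as
    (va0 & H0 & Hva0 & Sf & Hz0 & Shf & Shk0 & SW0 & SP0 & Hpt0 & LW0 & Lf & LP0 & CP0 & Cf & CW0 & Mpsi0
     & HS0 & HL0 & SH0 & DH0 & LH0 & CH0 & LDH0).
  destruct (solve a b f k1 zf zk1 Ha Hb SRf SR1) as
    (va1 & H1 & Hva1 & _ & Hz1 & _ & Shk1 & SW1 & SP1 & Hpt1 & LW1 & _ & LP1 & CP1 & _ & CW1 & Mpsi1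
     & HS1 & HL1 & SH1 & DH1 & LH1 & CH1 & LDH1).
  assert (E0 := sol_ev f k0 H0 g0 va0 r0 (fun v Hv => proj2 (proj2 (proj2 (proj2 (proj2 (proj2 (Hpt0 v Hv)))))))
                  HS0 LH0 Sol0).
  assert (E1 := sol_ev f k1 H1 g1 va1 r1 (fun v Hv => proj2 (proj2 (proj2 (proj2 (proj2 (proj2 (Hpt1 v Hv)))))))
                  HS1 LH1 Sol1).
  set (v0 := fun L => H0 (ln (ln L))). set (v1 := fun L => H1 (ln (ln L))).
  assert (Lv0 : is_lim v0 p_infty p_infty) by (apply (lim_alongH H0 (fun x => x)); auto; apply is_lim_id).
  assert (Lv1 : is_lim v1 p_infty p_infty) by (apply (lim_alongH H1 (fun x => x)); auto; apply is_lim_id).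
  destruct (lim_ev_gt _ _ 0 Lf ltac:(lra)) as [Mh HMh].
  set (V := Rmax (Rmax va0 va1) Mh + 1).
  assert (V0 : va0 < V) by (unfold V; pose proof (Rmax_l (Rmax va0 va1) Mh); pose proof (Rmax_l va0 va1); lra).
  assert (V1 : va1 < V) by (unfold V; pose proof (Rmax_l (Rmax va0 va1) Mh); pose proof (Rmax_r va0 va1); lra).
  assert (V2 : Mh < V) by (unfold V; pose proof (Rmax_r (Rmax va0 va1) Mh); lra).
  set (c0 := Phif f k0 (va0 + 1)). set (c1 := Phif f k1 (va1 + 1)).
  assert (EvL : ev (fun L => (((V < v0 L /\ V < v1 L) /\ (g0 L = gsol H0 L /\ g1 L = gsol H1 L)) /\
                      (exp (exp c0) < L /\ exp (exp c1) < L)))).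
  { apply ev_and; [apply ev_and; [apply ev_and| apply ev_and]| apply ev_and]; auto; try apply ev_gt.
    - apply is_lim_spec in Lv0. apply Lv0.
    - apply is_lim_spec in Lv1. apply Lv1. }
  assert (Phis : forall L, exp (exp c0) < L -> exp (exp c1) < L ->
     Phif f k0 (v0 L) = ln (ln L) /\ Phif f k1 (v1 L) = ln (ln L) /\ 0 < ln L).
  { intros L A0 A1.
    assert (B0 : exp c0 < ln L) by (apply ln_gt_of_exp_lt; auto).
    assert (B1 : c0 < ln (ln L)) by (apply ln_gt_of_exp_lt; auto).
    assert (B2 : c1 < ln (ln L)) by (apply ln_gt_of_exp_lt; apply ln_gt_of_exp_lt; auto).
    split; [apply HS0; auto|]. split; [apply HS1; auto|]. pose proof (exp_pos c0); lra. }
  set (T1 := fun L => k1 (exp (v1 L)) - k0 (exp (v1 L))).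
  assert (LT1 : is_lim T1 p_infty (Finite c)).
  { apply (lim_comp_inf (fun x => k1 x - k0 x) (fun L => exp (v1 L))); auto.
    apply (lim_comp_inf exp v1); auto. apply is_lim_exp_p. }
  set (B := fun v => exp (Phif f k0 v)).
  assert (KeyEq : forall L, exp (exp c0) < L -> exp (exp c1) < L -> V < v1 L -> B (v0 L) - B (v1 L) = T1 L).
  { intros L A0 A1 A2. destruct (Phis L A0 A1) as (P0 & P1 & P2).
    unfold B, T1. rewrite P0.
    destruct (Hpt0 (v1 L) ltac:(lra)) as (_ & _ & _ & _ & _ & _ & I0).
    destruct (Hpt1 (v1 L) ltac:(lra)) as (_ & _ & _ & _ & _ & _ & I1).
    rewrite <- I0. rewrite P1 in I1. rewrite exp_ln in I1 by auto. rewrite exp_ln by auto. lra. }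
  set (zeta := fun L => epsilon (inhabits 0) (fun z => Rmin (v1 L) (v0 L) <= z <= Rmax (v1 L) (v0 L) /\
                  Mx f (v0 L) - Mx f (v1 L) = Derive (Mx f) z * (v0 L - v1 L))).
  set (xi := fun L => epsilon (inhabits 0) (fun z => Rmin (v1 L) (v0 L) <= z <= Rmax (v1 L) (v0 L) /\
                  B (v0 L) - B (v1 L) = Derive B z * (v0 L - v1 L))).
  assert (Inside : forall L u, V < v0 L -> V < v1 L -> Rmin (v1 L) (v0 L) <= u -> V < u).
  { intros L u A B' C. destruct (Rle_or_lt (v1 L) (v0 L)); [rewrite Rmin_left in C| rewrite Rmin_right in C]; lra. }
  assert (Zs : forall L, V < v0 L -> V < v1 L ->
     (Rmin (v1 L) (v0 L) <= zeta L <= Rmax (v1 L) (v0 L) /\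
      Mx f (v0 L) - Mx f (v1 L) = Derive (Mx f) (zeta L) * (v0 L - v1 L)) /\
     (Rmin (v1 L) (v0 L) <= xi L <= Rmax (v1 L) (v0 L) /\
      B (v0 L) - B (v1 L) = Derive B (xi L) * (v0 L - v1 L))).
  { intros L A0 A1. split.
    - unfold zeta. apply (epsilon_spec (inhabits 0) (fun z => Rmin (v1 L) (v0 L) <= z <= Rmax (v1 L) (v0 L) /\
                  Mx f (v0 L) - Mx f (v1 L) = Derive (Mx f) z * (v0 L - v1 L))).
      apply (mvt (Mx f) (v1 L) (v0 L)). intros u Hu.
      eexists. apply (DMx_lemma f va0 Shf). specialize (Inside L u A0 A1 (proj1 Hu)). lra.
    - unfold xi. apply (epsilon_spec (inhabits 0) (fun z => Rmin (v1 L) (v0 L) <= z <= Rmax (v1 L) (v0 L) /\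
                  B (v0 L) - B (v1 L) = Derive B z * (v0 L - v1 L))).
      apply (mvt B (v1 L) (v0 L)). intros u Hu.
      unfold B. apply ex_derive_comp. eexists; apply is_derive_exp.
      apply (smooth_ex_derive va0); auto. specialize (Inside L u A0 A1 (proj1 Hu)). lra. }
  set (rho2 := fun L => exp (v0 L - zeta L) * exp (hlog f (zeta L) - hlog f (xi L)) *
                 (Nf f (zeta L) * / (Wfun f k0 (xi L) * Derive (Phif f k0) (xi L)))).
  set (Tg := fun L => g0 L * (Derive f (g0 L) - Derive f (g1 L))).
  assert (Ident : ev (fun L => T1 L * rho2 L = Tg L)).
  { apply (ev_imp _ _ EvL). intros L [[[A0 A1] [G0 G1]] [C0 C1]].
    destruct (Zs L A0 A1) as [[Zb Ze] [Xb Xe]].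
    assert (Vz : V < zeta L) by (apply (Inside L); auto; apply Zb).
    assert (Vx : V < xi L) by (apply (Inside L); auto; apply Xb).
    destruct (Hpt0 (v0 L) ltac:(lra)) as (F0 & _ & _ & _ & _ & D0 & _).
    destruct (Hpt0 (v1 L) ltac:(lra)) as (F1 & _ & _ & _ & _ & D1 & _).
    destruct (Hpt0 (xi L) ltac:(lra)) as (_ & _ & Wx & Px & _ & _ & _).
    unfold Tg. rewrite G0, G1. unfold gsol. fold (v0 L) (v1 L).
    rewrite (EMx_lemma f (v0 L) F0 D0), (EMx_lemma f (v1 L) F1 D1).
    rewrite Ze. rewrite <- (KeyEq L C0 C1 A1). rewrite Xe.
    rewrite (is_derive_unique _ _ _ (DMx_lemma f va0 Shf (zeta L) ltac:(lra))).
    assert (DB : Derive B (xi L) = Derive (Phif f k0) (xi L) * (exp (hlog f (xi L)) * Wfun f k0 (xi L))).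
    { unfold B. rewrite (Derive_comp exp (Phif f k0) (xi L)).
      - rewrite (is_derive_unique exp _ (exp (Phif f k0 (xi L)))) by apply is_derive_exp.
        unfold Phif. rewrite exp_plus, exp_ln by lra. reflexivity.
      - eexists; apply is_derive_exp.
      - apply (smooth_ex_derive va0); auto; lra. }
    rewrite DB. unfold rho2. rewrite !exp_minus.
    pose proof (exp_pos (v0 L)). pose proof (exp_pos (zeta L)). pose proof (exp_pos (hlog f (xi L))).
    pose proof (exp_pos (hlog f (zeta L))).
    field. repeat split; lra. }
  set (Dd := fun L => ln (Wfun f k0 (v1 L)) - ln (Wfun f k1 (v1 L))).
  assert (LDd : is_lim Dd p_infty (Finite 0)).
  { apply (lim_comp_inf (fun v => ln (Wfun f k0 v) - ln (Wfun f k1 v)) v1); auto.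
    replace 0 with (ln (a - 1) - ln (a - 1)) by ring.
    assert (Cl : continuous ln (a - 1)) by (apply cont_exd; eexists; apply is_derive_ln; lra).
    apply lim_minus; apply (is_lim_comp_continuous _ ln p_infty (a - 1)); auto. }
  assert (Ld : is_lim (fun L => v0 L - v1 L) p_infty (Finite 0)).
  { apply lim_squeeze0 with Dd (2 / a). apply Rlt_le, Rdiv_lt_0_compat; lra.
    - apply (ev_imp _ _ EvL). intros L [[[A0 A1] _] [C0 C1]].
      destruct (Phis L C0 C1) as (P0 & P1 & P2).
      assert (Lb := abs_lb (Phif f k0) va0 (a / 2) (v0 L) (v1 L) ltac:(lra) SP0
                      (fun v Hv => proj1 (proj1 (proj2 (proj2 (proj2 (Hpt0 v Hv)))))) ltac:(lra) ltac:(lra)).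
      assert (E : Phif f k0 (v1 L) - Phif f k0 (v0 L) = Dd L).
      { rewrite P0, <- P1. unfold Dd, Phif. ring. }
      rewrite E in Lb. rewrite <- Rabs_Ropp. replace (- (v0 L - v1 L)) with (v1 L - v0 L) by ring.
      apply Rmult_le_reg_l with (a / 2). lra.
      replace (a / 2 * (2 / a * Rabs (Dd L))) with (Rabs (Dd L)) by (field; lra). exact Lb.
    - exact LDd. }
  assert (Lz : is_lim (fun L => v0 L - zeta L) p_infty (Finite 0)).
  { apply lim_squeeze0 with (fun L => v0 L - v1 L) 1. lra.
    - apply (ev_imp _ _ EvL). intros L [[[A0 A1] _] _].
      destruct (Zs L A0 A1) as [[Zb _] _]. rewrite Rmult_1_l.
      destruct (between_abs (v1 L) (v0 L) (zeta L) Zb) as [X _]. exact X.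
    - exact Ld. }
  assert (Lhz : is_lim (fun L => hlog f (zeta L) - hlog f (xi L)) p_infty (Finite 0)).
  { apply lim_squeeze0 with (fun L => v0 L - v1 L) (2 * a). lra.
    - apply (ev_imp _ _ EvL). intros L [[[A0 A1] _] _].
      destruct (Zs L A0 A1) as [[Zb _] [Xb _]].
      apply Rle_trans with (2 * a * Rabs (xi L - zeta L)).
      + rewrite <- Rabs_Ropp. replace (- (hlog f (zeta L) - hlog f (xi L))) with (hlog f (xi L) - hlog f (zeta L)) by ring.
        apply abs_mvt. intros u Hu.
        assert (Vu : V < u).
        { assert (Vz : V < zeta L) by (apply (Inside L); auto; apply Zb).
          assert (Vx : V < xi L) by (apply (Inside L); auto; apply Xb).
          destruct (Rle_or_lt (zeta L) (xi L)); [rewrite Rmin_left in Hu| rewrite Rmin_right in Hu]; lra. }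
        split; [apply (smooth_ex_derive va0); auto; lra|].
        destruct (Hpt0 u ltac:(lra)) as (_ & _ & _ & _ & Hb2 & _).
        specialize (HMh u ltac:(lra)). rewrite Rabs_right; lra.
      + apply Rmult_le_compat_l; [lra|]. apply between2_abs; auto.
    - exact Ld. }
  assert (Lz8 : is_lim zeta p_infty p_infty).
  { apply lim_between_inf with v1 v0; auto. apply (ev_imp _ _ EvL). intros L [[[A0 A1] _] _].
    apply (Zs L A0 A1). }
  assert (Lx8 : is_lim xi p_infty p_infty).
  { apply lim_between_inf with v1 v0; auto. apply (ev_imp _ _ EvL). intros L [[[A0 A1] _] _].
    apply (Zs L A0 A1). }
  assert (Hddf : is_lim (Derive (Derive (hlog f))) p_infty (Finite 0)).
  { destruct (Cf 1%nat) as (_ & _ & X & _); exact X. }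
  assert (LN : is_lim (Nf f) p_infty (Finite ((a - 1) * a + 0))).
  { unfold Nf. apply lim_plus; auto. apply lim_mult; auto. apply lim_minus; auto. apply lim_const. }
  assert (Lrho : is_lim rho2 p_infty (Finite 1)).
  { unfold rho2. replace (Finite 1) with (Finite (1 * 1 * (((a - 1) * a + 0) * / ((a - 1) * a))))
      by (f_equal; field; lra).
    apply lim_mult; [apply lim_mult; apply lim_exp0; auto|].
    apply lim_mult.
    - apply (lim_comp_inf (Nf f) zeta); auto.
    - apply lim_inv; [|apply Rmult_integral_contrapositive; lra].
      apply (lim_comp_inf (fun v => Wfun f k0 v * Derive (Phif f k0) v) xi); auto.
      apply lim_mult; auto. }
  assert (LTg : is_lim Tg p_infty (Finite c)).
  { apply lim_ext_ev with (1 := Ident). replace c with (c * 1) by ring. apply lim_mult; auto. }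
  split; [exact LTg|].
  apply lim_ext_ev with (fun L => exp (v1 L - v0 L) * Tg L).
  - apply (ev_imp _ _ EvL). intros L [[_ [G0 G1]] _]. unfold Tg. rewrite G0, G1. unfold gsol.
    fold (v0 L) (v1 L). rewrite exp_minus. field. apply Rgt_not_eq, exp_pos.
  - replace c with (1 * c) by ring. apply lim_mult; auto. apply lim_exp0.
    apply is_lim_ext with (fun L => - (v0 L - v1 L)). intros; ring.
    replace (Finite 0) with (Rbar_opp (Finite 0)) by (simpl; f_equal; ring). apply is_lim_opp; auto.
Qed.

Theorem lemma2p2 (alpha b : R) (f k : R -> R) :
  1 < alpha -> SR alpha f -> b < alpha -> SR b k ->
  (* (i) *)
  (exists (r_o : R) (g : R -> R),
     0 < r_o /\
     is_solution_map f k r_o g /\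
     SR_on r_o 0 g /\
     SR_on (ln r_o) (1 / alpha) (fun L => g (exp L)) /\
     (* (ii) *)
     (forall gamma delta : R, 0 < gamma -> 0 < delta ->
        exists z : R, r_o < z /\
          forall L y : R, z < L ->
            Rpower (ln L) (- gamma) <= y <= Rpower (ln L) gamma ->
            Rabs (g L * (Derive f (g (y * L)) - Derive f (g L)) - ln y)
              <= delta * Rabs (ln y)) /\
     (* (iii) *)
     is_lim (fun L => Derive g L * L * ln L / g L) p_infty (Finite (1 / alpha)) /\
     is_lim (fun L => f (g L) / ln L) p_infty (Finite (1 / (alpha - 1))) /\
     is_lim (fun L => g L * Derive f (g L) / ln L) p_infty
       (Finite (alpha / (alpha - 1))) /\
     is_lim (fun L => (g L * Derive f (g L) - f (g L)) / ln L) p_infty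
       (Finite 1)) /\
  (* (iv) *)
  (forall (k0 k1 : R -> R) (c r0 r1 : R) (g0 g1 : R -> R),
     SR b k0 -> SR b k1 ->
     is_lim (fun L => k1 L - k0 L) p_infty (Finite c) ->
     is_solution_map f k0 r0 g0 -> is_solution_map f k1 r1 g1 ->
     is_lim (fun L => g0 L * (Derive f (g0 L) - Derive f (g1 L))) p_infty (Finite c) /\
     is_lim (fun L => g1 L * (Derive f (g0 L) - Derive f (g1 L))) p_infty (Finite c)).
Proof.
  intros Ha [zf SRf] Hb [zk SRk].
  destruct (solve alpha b f k zf zk Ha Hb SRf SRk) as
    (va & H & Hva & Sf & Hz & Shf & Shk & SW & SP & Hpt & LW & Lf & LP & CP & Cf & CW & Mpsi
     & HS & HL & SH & DH & LH & CH & LDH).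
  split.
  - exists (exp (exp (Phif f k (va + 1)))), (gsol H).
    split; [apply exp_pos|].
    split.
    { apply is_sol; auto. intros v Hv; apply Hpt; auto. }
    destruct (SR_g alpha (Phif f k (va + 1)) H Ha SH CH LDH LH) as [SR1 SR2].
    split; [exact SR1|]. split; [exact SR2|].
    split.
    { intros gamma delta Hg Hd.
      apply (part_ii alpha f k va H Ha Shf Cf Hpt LW Lf LP HS SH DH LH gamma delta Hg Hd). }
    apply (part_iii alpha f k va H Ha Hpt LW Lf HS SH LH LDH).
  - intros k0 k1 c r0 r1 g0 g1 [z0 SR0] [z1 SR1] Lk S0 S1.
    apply (part_iv alpha b f k0 k1 zf z0 z1 c r0 r1 g0 g1); auto.
Qed.
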